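(* Let $H$ be a real Hilbert space, $f:H\to\mathbb{R}\cup\{+\infty\}$ a proper lower semicontinuous paraconcave function and $\bar x\in\operatorname{dom}f$ with $0\in\partial_pf(\bar x)$. Suppose $f$ is continuous at $\bar x$ and twice epi-differentiable (in the sense of Mosco) at $\bar x$ relative to $0$, and $\operatorname{qri}\big(N_M(\operatorname{gph}\partial_pf,(\bar x,0))\big)\neq\emptyset$. If $\bar x$ is a strict local minimizer of order two for $f$, then $f$ satisfies the second-order optimality conditions of the first, second and third kinds at $\bar x$.
   Context: $S_H$ is the unit sphere of $H$; $B(x,\delta)$ the open ball; weak convergence is denoted $\stackrel{w}{\to}$. $\bar x$ is a strict local minimizer of order two for $f$ if there exist $\beta,\delta>0$ with $f(x)\ge f(\bar x)+\frac{\beta}{2}\|x-\bar x\|^2$ for all $x\in B(\bar x,\delta)$. Proximal subdifferential: $\zeta\in\partial_p f(x)$ iff there exist $\sigma,\delta>0$ with $f(y)\ge f(x)+\langle\zeta,y-x\rangle-\frac{\sigma}{2}\|y-x\|^2$ whenever $\|y-x\|<\delta$. $\Delta_2 f(\bar x,p,t,u):=\frac{f(\bar x+tu)-f(\bar x)-t\langle p,u\rangle}{\frac12t^2}$, $f''_-(\bar x,p,h):=\liminf_{h'\to h,\,t\downarrow0}\Delta_2f(\bar x,p,t,h')$. Mixed contingent cone: $(h,z)\in T_M(\operatorname{gph}\partial_pf,(\bar x,p))$ iff there exist $t_n\to0^+$, $h_n\to h$ in norm, $z_n\stackrel{w}{\to}z$ with $p+t_nz_n\in\partial_pf(\bar x+t_nh_n)$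 for all $n$. $D^2_Mf(\bar x,p)(h):=\{z:(h,z)\in T_M(\operatorname{gph}\partial_pf,(\bar x,p))\}$. $N_M(\operatorname{gph}\partial_pf,(\bar x,p)):=\{(a,b):\langle a,h\rangle+\langle b,z\rangle\le0\ \forall(h,z)\in T_M(\operatorname{gph}\partial_pf,(\bar x,p))\}$; $\partial^2_Mf(\bar x,p)(h):=\{z:(z,-h)\in N_M(\operatorname{gph}\partial_pf,(\bar x,p))\}$. For a set-valued map $G$, $\operatorname{dom}G=\{h:G(h)\ne\emptyset\}$. $\operatorname{qri}A:=\{x\in A:\overline{\operatorname{cone}}(A-x)\text{ is a linear subspace}\}$. Second-order optimality conditions at $\bar x$: first kind: $\exists\beta>0$ with $f''_-(\bar x,0,h)\ge\beta$ for all $h\in S_H$; second kind: $\exists\beta>0$ such that for every $h\in\operatorname{dom}D^2_Mf(\bar x,0)\cap S_H$ there is $z\in D^2_Mf(\bar x,0)(h)$ with $\langle z,h\rangle\ge\beta$; third kind: $\exists\beta>0$ with $\langle z,h\rangle\ge\beta$ for all $h\in S_H\cap\operatorname{dom}\partial^2_Mf(\bar x,0)$, $z\in\partial^2_Mf(\bar x,0)(h)$. $f$ is paraconcave if $f-\frac1{2\lambda}\|\cdot\|^2$ is concave for some $\lambda>0$. Twice epi-differentiability (Mosco sense) at $\bar x$ relative to $p$: there is a proper function $\phi$ such that for every $t_n\to0^+$ the epigraphs of $\Delta_2f(\bar x,p,t_n,\cdot)$ Mosco converge to $\operatorname{epi}\phi$, where $C_n\to C$ in the Mosco sense means $C$ equals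 both the set of norm limits of sequences $x_n\in C_n$ and the set of weak limits of subsequences $x_{n_k}\in C_{n_k}$. *)

(* Defs.v *)
From Stdlib Require Import Reals Lra.
Open Scope R_scope.

Record Hilbert := {
  hcar :> Type;
  hzero : hcar;
  hadd : hcar -> hcar -> hcar;
  hopp : hcar -> hcar;
  hscal : R -> hcar -> hcar;
  hinner : hcar -> hcar -> R;
  hadd_assoc : forall x y z, hadd x (hadd y z) = hadd (hadd x y) z;
  hadd_comm : forall x y, hadd x y = hadd y x;
  hadd_0 : forall x, hadd x hzero = x;
  hadd_opp : forall x, hadd x (hopp x) = hzero;
  hscal_1 : forall x, hscal 1 x = x;
  hscal_assoc : forall a b x, hscal a (hscal b x) = hscal (a * b) x;
  hscal_distr_r : forall a x y, hscal a (hadd x y) = hadd (hscal a x) (hscal a y);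
  hscal_distr_l : forall a b x, hscal (a + b) x = hadd (hscal a x) (hscal b x);
  hinner_sym : forall x y, hinner x y = hinner y x;
  hinner_add_l : forall x y z, hinner (hadd x y) z = hinner x z + hinner y z;
  hinner_scal_l : forall a x y, hinner (hscal a x) y = a * hinner x y;
  hinner_pos : forall x, 0 <= hinner x x;
  hinner_def : forall x, hinner x x = 0 -> x = hzero;
  hcomplete : forall u : nat -> hcar,
    (forall eps, 0 < eps -> exists N, forall m n, (N <= m)%nat -> (N <= n)%nat ->
        sqrt (hinner (hadd (u m) (hopp (u n))) (hadd (u m) (hopp (u n)))) < eps) ->
    exists l, forall eps, 0 < eps -> exists N, forall n, (N <= n)%nat ->
        sqrt (hinner (hadd (u n) (hopp l)) (hadd (u n) (hopp l))) < eps
}.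

Arguments hzero {_}.
Arguments hadd {_}.
Arguments hopp {_}.
Arguments hscal {_}.
Arguments hinner {_}.

Definition hsub {H : Hilbert} (x y : H) : H := hadd x (hopp y).
Definition hnorm {H : Hilbert} (x : H) : R := sqrt (hinner x x).

Definition ball {H : Hilbert} (x : H) (d : R) (y : H) : Prop := hnorm (hsub y x) < d.

Definition cv_norm {H : Hilbert} (u : nat -> H) (l : H) : Prop :=
  forall eps, 0 < eps -> exists N, forall n, (N <= n)%nat -> hnorm (hsub (u n) l) < eps.
Definition cv_weak {H : Hilbert} (u : nat -> H) (l : H) : Prop :=
  forall w : H, Un_cv (fun n => hinner (u n) w) (hinner l w).

Inductive ereal := Fin (r : R) | Pinf.

Definition ele (a b : ereal) : Prop :=
  match a, b with
  | _, Pinf => True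
  | Pinf, Fin _ => False
  | Fin x, Fin y => x <= y
  end.
Definition elt (a b : ereal) : Prop :=
  match a, b with
  | Fin _, Pinf => True
  | Pinf, _ => False
  | Fin x, Fin y => x < y
  end.

Section Fun.
Context {H : Hilbert}.
Implicit Types (f : H -> ereal).

Definition in_dom f (x : H) : Prop := exists r, f x = Fin r.
Definition proper f : Prop := exists x, in_dom f x.

Definition lsc f : Prop :=
  forall (x : H) (a : R), elt (Fin a) (f x) ->
    exists d, 0 < d /\ forall y, ball x d y -> elt (Fin a) (f y).

Definition continuous_at f (x : H) : Prop :=
  exists fx, f x = Fin fx /\
    forall eps, 0 < eps -> exists d, 0 < d /\
      forall y, ball x d y -> exists fy, f y = Fin fy /\ Rabs (fy - fx) < eps.

Definition shift_sq f (c : R) (x : H) : ereal :=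
  match f x with Fin a => Fin (a - c * (hnorm x) ^ 2) | Pinf => Pinf end.

(** concavity of an extended-valued function = convexity of its hypograph *)
Definition concave (g : H -> ereal) : Prop :=
  forall (x y : H) (r s t : R), 0 <= t <= 1 ->
    ele (Fin r) (g x) -> ele (Fin s) (g y) ->
    ele (Fin (t * r + (1 - t) * s)) (g (hadd (hscal t x) (hscal (1 - t) y))).

Definition paraconcave f : Prop :=
  exists lam, 0 < lam /\ concave (shift_sq f (1 / (2 * lam))).

Definition prox_subdiff f (x zeta : H) : Prop :=
  exists fx, f x = Fin fx /\
  exists sigma delta, 0 < sigma /\ 0 < delta /\
    forall y, hnorm (hsub y x) < delta ->
      ele (Fin (fx + hinner zeta (hsub y x) - sigma / 2 * (hnorm (hsub y x)) ^ 2)) (f y).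

Definition strict_lmin_order2 f (xb : H) : Prop :=
  exists beta delta, 0 < beta /\ 0 < delta /\
  exists fxb, f xb = Fin fxb /\
    forall x, ball xb delta x ->
      ele (Fin (fxb + beta / 2 * (hnorm (hsub x xb)) ^ 2)) (f x).

Definition Delta2 f (xb p : H) (t : R) (u : H) : ereal :=
  match f xb, f (hadd xb (hscal t u)) with
  | Fin a, Fin b => Fin ((b - a - t * hinner p u) / (t ^ 2 / 2))
  | _, _ => Pinf
  end.

(** "f''_-(xb,p,h) >= beta", where f''_- = liminf_{h'->h, t↓0} Δ2 f(xb,p,t,h'),
    written out: for every eps>0 the infimum over a punctured neighbourhood is >= beta-eps *)
Definition lower_second_subderiv_ge f (xb p h : H) (beta : R) : Prop :=
  forall eps, 0 < eps -> exists delta, 0 < delta /\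
    forall (h' : H) (t : R), hnorm (hsub h' h) < delta -> 0 < t < delta ->
      ele (Fin (beta - eps)) (Delta2 f xb p t h').

(** mixed contingent cone to gph ∂_p f at (xb,p) *)
Definition TM f (xb p : H) (h z : H) : Prop :=
  exists (t : nat -> R) (hs zs : nat -> H),
    (forall n, 0 < t n) /\ Un_cv t 0 /\ cv_norm hs h /\ cv_weak zs z /\
    forall n, prox_subdiff f (hadd xb (hscal (t n) (hs n))) (hadd p (hscal (t n) (zs n))).

Definition D2M f (xb p : H) (h z : H) : Prop := TM f xb p h z.

Definition NM f (xb p : H) (a b : H) : Prop :=
  forall h z, TM f xb p h z -> hinner a h + hinner b z <= 0.

Definition partial2M f (xb p : H) (h z : H) : Prop := NM f xb p z (hopp h).

Definition cone_shift (A : H -> H -> Prop) (a b : H) (u v : H) : Prop :=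
  exists (l : R) (a' b' : H), 0 <= l /\ A a' b' /\
    u = hscal l (hsub a' a) /\ v = hscal l (hsub b' b).

Definition closure2 (S : H -> H -> Prop) (u v : H) : Prop :=
  forall eps, 0 < eps -> exists u' v', S u' v' /\ hnorm (hsub u u') + hnorm (hsub v v') < eps.

Definition lin_subspace2 (S : H -> H -> Prop) : Prop :=
  S hzero hzero /\
  (forall u v u' v', S u v -> S u' v' -> S (hadd u u') (hadd v v')) /\
  (forall l u v, S u v -> S (hscal l u) (hscal l v)).

Definition in_qri (A : H -> H -> Prop) (a b : H) : Prop :=
  A a b /\ lin_subspace2 (closure2 (cone_shift A a b)).

Definition qri_nonempty (A : H -> H -> Prop) : Prop := exists a b, in_qri A a b.

Definition mosco_cv (C : nat -> H -> R -> Prop) (Cl : H -> R -> Prop) : Prop :=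
  (forall u r, Cl u r <->
     exists (us : nat -> H) (rs : nat -> R),
       (forall n, C n (us n) (rs n)) /\ cv_norm us u /\ Un_cv rs r) /\
  (forall u r, Cl u r <->
     exists (k : nat -> nat) (us : nat -> H) (rs : nat -> R),
       (forall i, (k i < k (S i))%nat) /\ (forall i, C (k i) (us i) (rs i)) /\
       cv_weak us u /\ Un_cv rs r).

Definition epi (g : H -> ereal) (u : H) (r : R) : Prop := ele (g u) (Fin r).

Definition twice_epi_diff_mosco f (xb p : H) : Prop :=
  exists phi : H -> ereal, proper phi /\
    forall t : nat -> R, (forall n, 0 < t n) -> Un_cv t 0 ->
      mosco_cv (fun n => epi (Delta2 f xb p (t n))) (epi phi).

Definition soc_first_kind f (xb : H) : Prop :=
  exists beta, 0 < beta /\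
    forall h, hnorm h = 1 -> lower_second_subderiv_ge f xb hzero h beta.

Definition soc_second_kind f (xb : H) : Prop :=
  exists beta, 0 < beta /\
    forall h, hnorm h = 1 -> (exists z, D2M f xb hzero h z) ->
      exists z, D2M f xb hzero h z /\ beta <= hinner z h.

Definition soc_third_kind f (xb : H) : Prop :=
  exists beta, 0 < beta /\
    forall h z, hnorm h = 1 -> (exists z', partial2M f xb hzero h z') ->
      partial2M f xb hzero h z -> beta <= hinner z h.

End Fun.

(* Main.v *)
Require Import Defs.
From Stdlib Require Import Reals Lra Lia Psatz Classical ClassicalEpsilon.
From Stdlib Require Rtopology.
Open Scope R_scope.

Arguments hadd_assoc {_}. Arguments hadd_comm {_}. Arguments hadd_0 {_}. Arguments hadd_opp {_}.
Arguments hscal_1 {_}. Arguments hscal_assoc {_}. Arguments hscal_distr_r {_}. Arguments hscal_distr_l {_}.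
Arguments hinner_sym {_}. Arguments hinner_add_l {_}. Arguments hinner_scal_l {_}. Arguments hinner_pos {_}.
Arguments hinner_def {_}. Arguments hcomplete {_}.

Section Basics.
Context {H : Hilbert}.
Implicit Types (x y z u v w : H).

Lemma hadd_0_l x : hadd hzero x = x.
Proof. rewrite hadd_comm; apply hadd_0. Qed.

Lemma hadd_cancel_r x y z : hadd x z = hadd y z -> x = y.
Proof.
  intros E. rewrite <- (hadd_0 x), <- (hadd_0 y), <- (hadd_opp z), !hadd_assoc, E.
  reflexivity.
Qed.

Lemma hscal_0 x : hscal 0 x = hzero.
Proof.
  apply (hadd_cancel_r _ _ (hscal 0 x)).
  rewrite <- hscal_distr_l, Rplus_0_l, hadd_0_l. reflexivity.
Qed.

Lemma hopp_scal x : hopp x = hscal (-1) x.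
Proof.
  assert (E : hadd x (hscal (-1) x) = hzero).
  { rewrite <- (hscal_1 x) at 1. rewrite <- hscal_distr_l.
    replace (1 + -1) with 0 by ring. apply hscal_0. }
  rewrite <- (hadd_0 (hopp x)), <- E, hadd_assoc, (hadd_comm (hopp x) x),
    hadd_opp, hadd_0_l. reflexivity.
Qed.

Lemma hinner_0_l y : hinner hzero y = 0.
Proof. rewrite <- (hscal_0 y), hinner_scal_l. ring. Qed.
Lemma hinner_0_r y : hinner y hzero = 0.
Proof. rewrite hinner_sym; apply hinner_0_l. Qed.
Lemma hinner_add_r x y z : hinner x (hadd y z) = hinner x y + hinner x z.
Proof. rewrite !(hinner_sym x), hinner_add_l. reflexivity. Qed.
Lemma hinner_scal_r a x y : hinner x (hscal a y) = a * hinner x y.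
Proof. rewrite !(hinner_sym x), hinner_scal_l. reflexivity. Qed.

Lemma veq x y : hinner (hsub x y) (hsub x y) = 0 -> x = y.
Proof.
  intros E. apply hinner_def in E. unfold hsub in E.
  rewrite <- (hadd_0 x), <- (hadd_opp y), (hadd_comm y), hadd_assoc, E, hadd_0_l.
  reflexivity.
Qed.

Lemma hsub_diag x : hsub x x = hzero.
Proof. apply hadd_opp. Qed.

Lemma hscal_zero a : hscal a (@hzero H) = hzero.
Proof. rewrite <- (hscal_0 hzero), hscal_assoc, Rmult_0_r. reflexivity. Qed.

End Basics.

Ltac isimpl := unfold hsub in *;
  repeat rewrite ?hopp_scal, ?hinner_add_l, ?hinner_add_r, ?hinner_scal_l,
    ?hinner_scal_r, ?hinner_0_l, ?hinner_0_r.
Ltac isimpl_in P := unfold hsub in P;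
  repeat rewrite ?hopp_scal, ?hinner_add_l, ?hinner_add_r, ?hinner_scal_l,
    ?hinner_scal_r, ?hinner_0_l, ?hinner_0_r in P.

Section Norms.
Context {H : Hilbert}.
Implicit Types (x y z u v w : H).

Lemma hnorm_nonneg x : 0 <= hnorm x.
Proof. apply sqrt_pos. Qed.

Lemma hnorm_sq x : hnorm x ^ 2 = hinner x x.
Proof. unfold hnorm. simpl. rewrite Rmult_1_r. apply sqrt_sqrt, hinner_pos. Qed.

Lemma hnorm_sq' x : hnorm x * hnorm x = hinner x x.
Proof. unfold hnorm. apply sqrt_sqrt, hinner_pos. Qed.

Lemma hnorm_zero : hnorm (@hzero H) = 0.
Proof. unfold hnorm. rewrite hinner_0_l. apply sqrt_0. Qed.

Lemma hnorm_eq0 x : hnorm x = 0 -> x = hzero.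
Proof. intros E. apply hinner_def. rewrite <- hnorm_sq, E. ring. Qed.

Lemma le_of_sq a b : 0 <= b -> a ^ 2 <= b ^ 2 -> a <= b.
Proof. intros Hb Hs. destruct (Rle_or_lt a b); auto. nra. Qed.

Lemma hnorm_le_sq x b : 0 <= b -> hinner x x <= b ^ 2 -> hnorm x <= b.
Proof. intros Hb Hs. apply le_of_sq; auto. rewrite hnorm_sq; auto. Qed.

Lemma CS_sq x y : (hinner x y) ^ 2 <= hinner x x * hinner y y.
Proof.
  destruct (Req_dec (hinner y y) 0) as [E|E].
  - apply hinner_def in E. subst y. rewrite hinner_0_r, hinner_0_l. nra.
  - assert (Hp := hinner_pos y).
    assert (Hc : 0 < hinner y y) by lra.
    set (t := hinner x y / hinner y y).
    assert (Ht : t * hinner y y = hinner x y) by (unfold t; field; lra).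
    assert (P := hinner_pos (hsub x (hscal t y))). isimpl_in P.
    try rewrite (hinner_sym y x) in P.
    assert (0 <= hinner x x - t * hinner x y) by nra.
    nra.
Qed.

Lemma CS x y : Rabs (hinner x y) <= hnorm x * hnorm y.
Proof.
  apply le_of_sq.
  - apply Rmult_le_pos; apply hnorm_nonneg.
  - rewrite pow2_abs, Rpow_mult_distr, !hnorm_sq. apply CS_sq.
Qed.

Lemma CS_le x y : hinner x y <= hnorm x * hnorm y.
Proof. eapply Rle_trans; [apply Rle_abs| apply CS]. Qed.

Lemma CS_ge x y : - (hnorm x * hnorm y) <= hinner x y.
Proof. assert (Hc := CS x y). assert (Ha := Rle_abs (- hinner x y)). rewrite Rabs_Ropp in Ha. lra. Qed.

Lemma hnorm_scal a x : hnorm (hscal a x) = Rabs a * hnorm x.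
Proof.
  unfold hnorm. rewrite hinner_scal_l, hinner_scal_r, <- Rmult_assoc.
  rewrite sqrt_mult_alt. 2: nra.
  f_equal. rewrite <- sqrt_Rsqr_abs. unfold Rsqr. reflexivity.
Qed.

Lemma hnorm_triangle x y : hnorm (hadd x y) <= hnorm x + hnorm y.
Proof.
  apply le_of_sq. { generalize (hnorm_nonneg x) (hnorm_nonneg y); lra. }
  rewrite hnorm_sq. isimpl. rewrite (hinner_sym y x).
  assert (C := CS_le x y).
  assert (A := hnorm_sq x). assert (B := hnorm_sq y). nra.
Qed.

Lemma hnorm_opp x : hnorm (hopp x) = hnorm x.
Proof. rewrite hopp_scal, hnorm_scal. rewrite Rabs_left by lra. ring. Qed.

Lemma hsub_swap x y : hsub x y = hopp (hsub y x).
Proof.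
  apply veq. isimpl. rewrite (hinner_sym y x). ring.
Qed.

Lemma hnorm_sub_sym x y : hnorm (hsub x y) = hnorm (hsub y x).
Proof. rewrite hsub_swap, hnorm_opp. reflexivity. Qed.

Lemma hnorm_sub_tri x y z : hnorm (hsub x z) <= hnorm (hsub x y) + hnorm (hsub y z).
Proof.
  replace (hsub x z) with (hadd (hsub x y) (hsub y z)). apply hnorm_triangle.
  apply veq. isimpl. rewrite ?(hinner_sym y x), ?(hinner_sym z x), ?(hinner_sym z y). ring.
Qed.

Lemma hnorm_rev_tri x y : hnorm x - hnorm (hsub x y) <= hnorm y.
Proof.
  assert (T := hnorm_triangle (hsub x y) y).
  replace (hadd (hsub x y) y) with x in T. lra.
  apply veq. isimpl. rewrite ?(hinner_sym y x). ring.
Qed.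

End Norms.

Lemma lim_small (r M K s0 : R) : 0 < s0 -> 0 <= K ->
  (forall s, 0 < s < s0 -> r <= M + s * K) -> r <= M.
Proof.
  intros Hs0 HK Hall. destruct (Rle_or_lt r M) as [|Hlt]; auto.
  set (s := Rmin (s0/2) ((r - M) / (2 * (K + 1)))).
  assert (Hs1 : s <= s0/2) by apply Rmin_l.
  assert (Hs2 : s <= (r - M) / (2 * (K + 1))) by apply Rmin_r.
  assert (Hs3 : 0 < s).
  { unfold s. apply Rmin_glb_lt. lra. apply Rdiv_lt_0_compat; lra. }
  assert (Hk : s * (2 * (K + 1)) <= r - M).
  { apply Rmult_le_reg_r with (/ (2 * (K+1))). apply Rinv_0_lt_compat; lra.
    rewrite Rmult_assoc, Rinv_r by lra. unfold Rdiv in Hs2. lra. }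
  specialize (Hall s ltac:(lra)). nra.
Qed.

Lemma alg_conv (s A B C : R) : 0 < s ->
  1 / (1 + s) * A + (1 - 1 / (1 + s)) * B <= C -> A + s * B <= (1 + s) * C.
Proof.
  intros Hs Hle.
  replace (A + s * B) with ((1+s) * (1 / (1 + s) * A + (1 - 1 / (1 + s)) * B)) by (field; lra).
  apply Rmult_le_compat_l; lra.
Qed.

Section Semiconcave.
Context {H : Hilbert} (f : H -> ereal) (c : R) (Hc : 0 < c)
  (Hconc : concave (shift_sq f c)).

Lemma ele_shift (y : H) (r : R) : ele (Fin r) (f y) ->
  ele (Fin (r - c * hnorm y ^ 2)) (shift_sq f c y).
Proof.
  unfold shift_sq. destruct (f y); simpl; auto. intros; lra.
Qed.

Lemma semiconcave_bound (x p : H) (fx : R) :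
  f x = Fin fx -> prox_subdiff f x p ->
  forall y, exists fy, f y = Fin fy /\
    fy <= fx + hinner p (hsub y x) + c * hnorm (hsub y x) ^ 2.
Proof.
  intros Efx [fx' [Efx' [sig [del [Hsig [Hdel Hprox]]]]]] y.
  rewrite Efx in Efx'. injection Efx' as <-.
  set (d := hsub y x).
  set (s0 := del / (hnorm d + 1)).
  assert (Hnd := hnorm_nonneg d).
  assert (Hs0 : 0 < s0) by (unfold s0; apply Rdiv_lt_0_compat; lra).
  set (K := (sig / 2 + c) * hnorm d ^ 2).
  assert (HK : 0 <= K) by (unfold K; assert (0 <= hnorm d ^2) by nra; nra).
  assert (Key : forall r, ele (Fin r) (f y) -> forall s, 0 < s < s0 ->
            r <= fx + hinner p d + c * hnorm d ^ 2 + s * K).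
  { intros r Hr s Hs.
    set (a := hadd x (hscal (- s) d)).
    assert (Had : hsub a x = hscal (-s) d).
    { apply veq. unfold a, d. isimpl. ring. }
    assert (Hna : hnorm (hsub a x) < del).
    { rewrite Had, hnorm_scal, Rabs_left by lra.
      assert (s * (hnorm d + 1) < del).
      { unfold s0 in Hs. destruct Hs as [_ Hs].
        apply (Rmult_lt_compat_r (hnorm d + 1)) in Hs; [|lra].
        unfold Rdiv in Hs. rewrite Rmult_assoc, Rinv_l in Hs by lra. lra. }
      nra. }
    specialize (Hprox a Hna).
    apply ele_shift in Hprox. apply ele_shift in Hr.
    assert (Hcv := Hconc a y _ _ (1 / (1 + s)) ltac:(split;
        [apply Rlt_le, Rdiv_lt_0_compat; lra|
         unfold Rdiv; rewrite Rmult_1_l; rewrite <- Rinv_1; apply Rinv_le_contravar; lra]) Hprox Hr).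
    replace (hadd (hscal (1 / (1 + s)) a) (hscal (1 - 1 / (1 + s)) y)) with x in Hcv.
    2:{ symmetry. apply veq. unfold a, d. isimpl.
        rewrite ?(hinner_sym y x). field; lra. }
    unfold shift_sq in Hcv. rewrite Efx in Hcv. simpl in Hcv.
    apply alg_conv in Hcv; [|lra].
    assert (N1 : forall z : H, hnorm z * (hnorm z * 1) = hinner z z)
      by (intros; rewrite Rmult_1_r; apply hnorm_sq').
    rewrite Had, !N1 in Hcv. rewrite !hnorm_sq. unfold K. rewrite hnorm_sq.
    unfold a, d in *. isimpl_in Hcv. isimpl.
    rewrite ?(hinner_sym y x) in *.
    assert (s * (r - (fx + (hinner p y + -1 * hinner p x) +
       c * (hinner y y + -1 * hinner x y + -1 * (hinner x y + -1 * hinner x x)) +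
       s * ((sig / 2 + c) * (hinner y y + -1 * hinner x y + -1 * (hinner x y + -1 * hinner x x)))))
       <= 0) by nra.
    nra. }
  destruct (f y) as [fy|] eqn:Efy.
  - exists fy. split; auto.
    apply (lim_small _ _ K s0); auto. intros s Hs. apply (Key fy); simpl; auto; lra.
  - exfalso.
    set (r := fx + hinner p d + c * hnorm d ^ 2 + s0 * K + 1).
    assert (Hr := Key r I (s0/2) ltac:(lra)). unfold r in Hr. nra.
Qed.

End Semiconcave.

Definition ev (P : nat -> Prop) := exists N, forall n, (N <= n)%nat -> P n.

Lemma ev_and (P Q : nat -> Prop) : ev P -> ev Q -> ev (fun n => P n /\ Q n).
Proof.
  intros [N1 H1] [N2 H2]. exists (max N1 N2). intros n Hn. split.
  apply H1; lia. apply H2; lia.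
Qed.

Lemma ev_impl (P Q : nat -> Prop) : ev P -> (forall n, P n -> Q n) -> ev Q.
Proof. intros [N HN] Hi. exists N. intros n Hn. apply Hi, HN, Hn. Qed.

Lemma ev_wit (P : nat -> Prop) : ev P -> exists n, P n.
Proof. intros [N HN]. exists N. apply HN. lia. Qed.

Lemma ev_cv (u : nat -> R) (l eps : R) : Un_cv u l -> 0 < eps ->
  ev (fun n => Rabs (u n - l) < eps).
Proof. intros Hu He. destruct (Hu eps He) as [N HN]. exists N. intros n Hn. apply HN; lia. Qed.

Lemma ev_cvn {H : Hilbert} (u : nat -> H) (l : H) (eps : R) : cv_norm u l -> 0 < eps ->
  ev (fun n => hnorm (hsub (u n) l) < eps).
Proof. intros Hu He. destruct (Hu eps He) as [N HN]. exists N. intros n Hn. apply HN; lia. Qed.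

Lemma ev_not (P : nat -> Prop) : ~ ev P -> forall N, exists n, (N <= n)%nat /\ ~ P n.
Proof.
  intros Hn N. apply NNPP. intros Hc. apply Hn. exists N. intros n Hle.
  apply NNPP. intros HP. apply Hc. exists n. auto.
Qed.

Fixpoint kseq (g : nat -> nat) (i : nat) : nat :=
  match i with O => g O | S i => g (S (kseq g i)) end.

Lemma subseq_of (P : nat -> Prop) : (forall N, exists n, (N <= n)%nat /\ P n) ->
  exists k : nat -> nat, (forall i, (k i < k (S i))%nat) /\ (forall i, P (k i)) /\
     (forall i, (i <= k i)%nat).
Proof.
  intros Hex.
  set (g := fun N => proj1_sig (constructive_indefinite_description _ (Hex N))).
  assert (Hg : forall N, (N <= g N)%nat /\ P (g N)).
  { intros N. unfold g. destruct (constructive_indefinite_description _ (Hex N)). auto. }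
  exists (kseq g). split; [|split].
  - intros i. simpl. destruct (Hg (S (kseq g i))). lia.
  - intros [|i]; simpl; apply Hg.
  - induction i; simpl. apply Hg. destruct (Hg (S (kseq g i))). lia.
Qed.

Lemma cvn_weak {H : Hilbert} (u : nat -> H) (l : H) : cv_norm u l -> cv_weak u l.
Proof.
  intros Hu w eps He.
  destruct (Hu (eps / (hnorm w + 1))) as [N HN].
  { apply Rdiv_lt_0_compat; auto. generalize (hnorm_nonneg w); lra. }
  exists N. intros n Hn. unfold R_dist.
  replace (hinner (u n) w - hinner l w) with (hinner (hsub (u n) l) w)
    by (isimpl; ring).
  eapply Rle_lt_trans; [apply CS|].
  specialize (HN n Hn). assert (Hw := hnorm_nonneg w).
  assert (Hs := hnorm_nonneg (hsub (u n) l)).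
  assert (hnorm (hsub (u n) l) * (hnorm w + 1) < eps).
  { apply (Rmult_lt_compat_r (hnorm w + 1)) in HN; [|lra].
    unfold Rdiv in HN. rewrite Rmult_assoc, Rinv_l in HN by lra. lra. }
  nra.
Qed.

Lemma cvn_sub {H : Hilbert} (u : nat -> H) (l : H) (k : nat -> nat) :
  (forall i, (i <= k i)%nat) -> cv_norm u l -> cv_norm (fun i => u (k i)) l.
Proof.
  intros Hk Hu eps He. destruct (Hu eps He) as [N HN]. exists N.
  intros n Hn. apply HN. specialize (Hk n). lia.
Qed.

Lemma cv_sub (u : nat -> R) (l : R) (k : nat -> nat) :
  (forall i, (i <= k i)%nat) -> Un_cv u l -> Un_cv (fun i => u (k i)) l.
Proof.
  intros Hk Hu eps He. destruct (Hu eps He) as [N HN]. exists N.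
  intros n Hn. apply HN. specialize (Hk n). lia.
Qed.

Lemma cv_const (r : R) : Un_cv (fun _ => r) r.
Proof. intros eps He. exists O. intros. unfold R_dist. rewrite Rminus_diag, Rabs_R0. auto. Qed.

Lemma cvn_const {H : Hilbert} (l : H) : cv_norm (fun _ => l) l.
Proof. intros eps He. exists O. intros. rewrite hsub_diag, hnorm_zero. auto. Qed.

Lemma cv_scal (u : nat -> R) (a : R) : Un_cv u 0 -> Un_cv (fun n => a * u n) 0.
Proof.
  intros Hu eps He. destruct (Hu (eps / (Rabs a + 1))) as [N HN].
  { apply Rdiv_lt_0_compat; auto. generalize (Rabs_pos a); lra. }
  exists N. intros n Hn. specialize (HN n Hn). unfold R_dist in *.
  rewrite Rminus_0_r in *. rewrite Rabs_mult.
  assert (Ha := Rabs_pos a). assert (Hu' := Rabs_pos (u n)).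
  assert (Rabs (u n) * (Rabs a + 1) < eps).
  { apply (Rmult_lt_compat_r (Rabs a + 1)) in HN; [|lra].
    unfold Rdiv in HN. rewrite Rmult_assoc, Rinv_l in HN by lra. lra. }
  nra.
Qed.

Lemma norm_bound_of_inner {H : Hilbert} (z : H) (K : R) :
  (forall e : H, hnorm e <= 1 -> - K <= hinner z e) -> hnorm z <= K.
Proof.
  intros Hall.
  destruct (Req_dec (hnorm z) 0) as [E|E].
  - rewrite E. specialize (Hall hzero). rewrite hnorm_zero, hinner_0_r in Hall. lra.
  - assert (Hp := hnorm_nonneg z).
    specialize (Hall (hscal (- / hnorm z) z)).
    rewrite hnorm_scal, hinner_scal_r, <- hnorm_sq' in Hall.
    rewrite Rabs_left in Hall.
    2:{ assert (0 < / hnorm z) by (apply Rinv_0_lt_compat; lra). lra. }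
    replace (- - / hnorm z * hnorm z) with 1 in Hall by (field; lra).
    replace (- / hnorm z * (hnorm z * hnorm z)) with (- hnorm z) in Hall by (field; lra).
    lra.
Qed.

Lemma small_inv (eps : R) : 0 < eps -> exists N : nat, forall n, (N <= n)%nat -> / (INR n + 1) < eps.
Proof.
  intros He. destruct (archimed_cor1 eps He) as [N [HN HN0]]. exists N. intros n Hn.
  assert (HNp : 0 < INR N) by (apply lt_0_INR; lia).
  assert (INR N <= INR n) by (apply le_INR; lia).
  eapply Rle_lt_trans; [|apply HN]. apply Rinv_le_contravar; lra.
Qed.

Fixpoint kseq2 (g : nat -> nat -> nat) (i : nat) : nat :=
  match i with O => g O O | S i' => g (S i') (S (kseq2 g i')) end.

Lemma bw_sub (u : nat -> R) (B : R) : (forall n, Rabs (u n) <= B) ->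
  exists s : nat -> nat, (forall i, (s i < s (S i))%nat) /\ exists L, Un_cv (fun i => u (s i)) L.
Proof.
  intros Hb.
  destruct (Rtopology.Bolzano_Weierstrass u (fun x => -B <= x <= B) (Rtopology.compact_P3 (-B) B)) as [l Hl].
  { intros n. specialize (Hb n). split; [|eapply Rle_trans; [apply Rle_abs|auto]].
    assert (Ha := Rle_abs (- u n)). rewrite Rabs_Ropp in Ha. lra. }
  assert (Hex : forall i N, exists p, (N <= p)%nat /\ Rabs (u p - l) < / (INR i + 1)).
  { intros i N. assert (Hp : 0 < / (INR i + 1)) by (apply Rinv_0_lt_compat; generalize (pos_INR i); lra).
    destruct (Hl (Rtopology.disc l (mkposreal _ Hp)) N) as [p [Hp1 Hp2]].
    { exists (mkposreal _ Hp). intros x Hx. auto. }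
    exists p. split; auto. }
  set (g := fun i N => proj1_sig (constructive_indefinite_description _ (Hex i N))).
  assert (Hg : forall i N, (N <= g i N)%nat /\ Rabs (u (g i N) - l) < / (INR i + 1)).
  { intros i N. unfold g. destruct (constructive_indefinite_description _ (Hex i N)). auto. }
  exists (kseq2 g). split.
  - intros i. simpl. destruct (Hg (S i) (S (kseq2 g i))). lia.
  - exists l. intros eps He. destruct (small_inv eps He) as [N HN]. exists N.
    intros n Hn. unfold R_dist.
    assert (Hk : Rabs (u (kseq2 g n) - l) < / (INR n + 1)).
    { destruct n; simpl; apply Hg. }
    specialize (HN n Hn). lra.
Qed.

Section Diag.
Variable a : nat -> nat -> R.
Variable B : R.
Hypothesis Hb : forall m n, Rabs (a m n) <= B.

Definition incr (s : nat -> nat) := forall i, (s i < s (S i))%nat.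

Lemma incr_ge s : incr s -> forall i, (i <= s i)%nat.
Proof. intros Hs. induction i. lia. specialize (Hs i). lia. Qed.

Lemma incr_mono s : incr s -> forall i j, (i < j)%nat -> (s i < s j)%nat.
Proof.
  intros Hs i j Hij. induction j. lia.
  destruct (Nat.eq_dec i j). subst. apply Hs. specialize (Hs j). assert (s i < s j)%nat by (apply IHj; lia). lia.
Qed.

Lemma ex_E : forall u : nat -> R, (forall n, Rabs (u n) <= B) ->
  exists s, incr s /\ exists L, Un_cv (fun i => u (s i)) L.
Proof. intros u Hu. apply (bw_sub u B Hu). Qed.

Definition Echoice (u : nat -> R) : nat -> nat :=
  match excluded_middle_informative (forall n, Rabs (u n) <= B) with
  | left Hu => proj1_sig (constructive_indefinite_description _ (ex_E u Hu))
  | right _ => fun i => i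
  end.

Lemma Echoice_spec u : (forall n, Rabs (u n) <= B) ->
  incr (Echoice u) /\ exists L, Un_cv (fun i => u (Echoice u i)) L.
Proof.
  intros Hu. unfold Echoice. destruct (excluded_middle_informative _); [|contradiction].
  destruct (constructive_indefinite_description _ _). auto.
Qed.

Fixpoint Sig (m : nat) : nat -> nat :=
  match m with
  | O => Echoice (a O)
  | S m' => fun i => Sig m' (Echoice (fun j => a (S m') (Sig m' j)) i)
  end.

Lemma Sig_spec m : incr (Sig m) /\ exists L, Un_cv (fun i => a m (Sig m i)) L.
Proof.
  induction m.
  - apply Echoice_spec. intros; apply Hb.
  - destruct IHm as [Hinc _].
    destruct (Echoice_spec (fun j => a (S m) (Sig m j)) ltac:(intros; apply Hb)) as [He [L HL]].
    split.
    + intros i. simpl. apply incr_mono; auto.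
    + exists L. simpl. auto.
Qed.

Lemma Sig_sub m j : exists r, (forall i, (i <= r i)%nat) /\ forall i, Sig (j + m) i = Sig m (r i).
Proof.
  induction j.
  - exists (fun i => i). split; auto.
  - destruct IHj as [r [Hr1 Hr2]].
    destruct (Echoice_spec (fun k => a (S (j + m)) (Sig (j + m) k)) ltac:(intros; apply Hb)) as [He _].
    exists (fun i => r (Echoice (fun k => a (S (j + m)) (Sig (j + m) k)) i)). split.
    + intros i. specialize (Hr1 (Echoice (fun k => a (S (j + m)) (Sig (j + m) k)) i)).
      assert (Hg := incr_ge _ He i). lia.
    + intros i. simpl. apply Hr2.
Qed.

Definition diag (i : nat) : nat := Sig i i.

Lemma diag_incr : incr diag.
Proof.
  intros i. unfold diag. simpl.
  destruct (Sig_spec i) as [Hi _].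
  destruct (Echoice_spec (fun j => a (S i) (Sig i j)) ltac:(intros; apply Hb)) as [He _].
  apply incr_mono; auto. assert (Hg := incr_ge _ He (S i)). lia.
Qed.

Lemma diag_cv m : exists L, Un_cv (fun i => a m (diag i)) L.
Proof.
  destruct (Sig_spec m) as [_ [L HL]]. exists L.
  intros eps He. destruct (HL eps He) as [N HN]. exists (max N m). intros i Hi.
  destruct (Sig_sub m (i - m)) as [r [Hr1 Hr2]].
  unfold diag. replace (Sig i i) with (Sig ((i - m) + m) i) by (f_equal; lia). rewrite Hr2.
  apply HN. specialize (Hr1 i). lia.
Qed.

End Diag.

Lemma Un_cv_ext (u v : nat -> R) l : (forall n, u n = v n) -> Un_cv u l -> Un_cv v l.
Proof. intros E Hu eps He. destruct (Hu eps He) as [N HN]. exists N. intros n Hn. rewrite <- E. auto. Qed.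

Lemma cv_mul_const (u : nat -> R) l a : Un_cv u l -> Un_cv (fun n => a * u n) (a * l).
Proof. intros Hu. apply (CV_mult (fun _ => a) u a l); auto. apply cv_const. Qed.

Lemma cv_bound (u : nat -> R) l K : Un_cv u l -> (forall n, Rabs (u n) <= K) -> Rabs l <= K.
Proof.
  intros Hu Hk. destruct (Rle_or_lt (Rabs l) K) as [|Hlt]; auto.
  destruct (Hu (Rabs l - K) ltac:(lra)) as [N HN]. specialize (HN N (le_n _)). specialize (Hk N).
  unfold R_dist in HN. assert (T := Rabs_triang_inv l (u N)).
  rewrite <- Rabs_Ropp in HN. replace (- (u N - l)) with (l - u N) in HN by ring. lra.
Qed.

Lemma hnorm_lt_sq {H : Hilbert} (x : H) b : 0 < b -> hinner x x < b ^ 2 -> hnorm x < b.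
Proof.
  intros Hb Hx. rewrite <- hnorm_sq in Hx. destruct (Rle_or_lt b (hnorm x)); auto.
  assert (b^2 <= hnorm x ^2) by nra. lra.
Qed.

Section WL.
Context {H : Hilbert} (Y : nat -> H) (B : R) (HB : forall i, hnorm (Y i) <= B)
  (HY : forall j, exists L, Un_cv (fun i => hinner (Y i) (Y j)) L).

Definition Acv (x : H) := exists L, Un_cv (fun i => hinner (Y i) x) L.

Lemma lim_add x y L1 L2 : Un_cv (fun i => hinner (Y i) x) L1 -> Un_cv (fun i => hinner (Y i) y) L2 ->
  Un_cv (fun i => hinner (Y i) (hadd x y)) (L1 + L2).
Proof.
  intros H1 H2. eapply Un_cv_ext; [|apply (CV_plus _ _ _ _ H1 H2)]. intros n. simpl. isimpl. ring.
Qed.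

Lemma lim_scal x L a : Un_cv (fun i => hinner (Y i) x) L ->
  Un_cv (fun i => hinner (Y i) (hscal a x)) (a * L).
Proof.
  intros H1. eapply Un_cv_ext; [|apply (cv_mul_const _ _ a H1)]. intros n. simpl. isimpl. ring.
Qed.

Lemma lim_zero : Un_cv (fun i => hinner (Y i) hzero) 0.
Proof. eapply Un_cv_ext; [|apply cv_const]. intros n. simpl. rewrite hinner_0_r. auto. Qed.

Lemma HB0 : 0 <= B.
Proof. eapply Rle_trans; [apply (hnorm_nonneg (Y O))| apply (HB O)]. Qed.

Lemma lim_bound x L : Un_cv (fun i => hinner (Y i) x) L -> Rabs L <= B * hnorm x.
Proof.
  intros H1. apply (cv_bound _ _ _ H1). intros n. eapply Rle_trans; [apply CS|].
  apply Rmult_le_compat_r. apply hnorm_nonneg. apply HB.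
Qed.

Definition Jv (x : H) (v : R) := exists L, Un_cv (fun i => hinner (Y i) x) L /\ v = hinner x x - 2 * L.

Lemma Jv_lb x v : Jv x v -> - B ^ 2 <= v.
Proof.
  intros [L [HL ->]]. assert (Hb := lim_bound x L HL). assert (Ha := Rle_abs L).
  rewrite <- hnorm_sq. assert (Hn := hnorm_nonneg x). assert (HB0' := HB0).
  assert (Hsq := pow2_ge_0 (hnorm x - B)). nra.
Qed.

Definition Eset (r : R) := exists x v, Jv x v /\ r = - v.

Lemma Eset_bound : bound Eset.
Proof. exists (B ^ 2). intros r [x [v [Hv ->]]]. apply Jv_lb in Hv. lra. Qed.

Lemma Eset_ne : exists r, Eset r.
Proof. exists 0. exists hzero, 0. split; [|ring]. exists 0. split. apply lim_zero. rewrite hinner_0_l. ring. Qed.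

Definition mlub := proj1_sig (completeness Eset Eset_bound Eset_ne).
Lemma mlub_spec : is_lub Eset mlub.
Proof. unfold mlub. destruct (completeness _ _ _). auto. Qed.

Definition Jstar := - mlub.

Lemma Jstar_le x v : Jv x v -> Jstar <= v.
Proof.
  intros Hv. destruct mlub_spec as [Hub _]. assert (Hr := Hub (- v) (ex_intro _ x (ex_intro _ v (conj Hv eq_refl)))).
  unfold Jstar. lra.
Qed.

Lemma Jstar_approx eta : 0 < eta -> exists x v, Jv x v /\ v < Jstar + eta.
Proof.
  intros He. apply NNPP. intros Hn.
  destruct mlub_spec as [_ Hl].
  assert (mlub <= mlub - eta); [|lra].
  apply Hl. intros r [x [v [Hv ->]]].
  destruct (Rle_or_lt (-v) (mlub - eta)) as [|Hlt]; auto.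
  exfalso. apply Hn. exists x, v. split; auto. unfold Jstar. lra.
Qed.

Lemma minseq_ex : forall k : nat, exists p : H * R,
  Un_cv (fun i => hinner (Y i) (fst p)) (snd p) /\
  hinner (fst p) (fst p) - 2 * snd p < Jstar + / (INR k + 1).
Proof.
  intros k. destruct (Jstar_approx (/ (INR k + 1))) as [x [v [[L [HL ->]] Hv]]].
  { apply Rinv_0_lt_compat. generalize (pos_INR k). lra. }
  exists (x, L). simpl. auto.
Qed.

Definition xi k := fst (proj1_sig (constructive_indefinite_description _ (minseq_ex k))).
Definition Lxi k := snd (proj1_sig (constructive_indefinite_description _ (minseq_ex k))).
Lemma xi_spec k : Un_cv (fun i => hinner (Y i) (xi k)) (Lxi k) /\
  hinner (xi k) (xi k) - 2 * Lxi k < Jstar + / (INR k + 1).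
Proof. unfold xi, Lxi. destruct (constructive_indefinite_description _ _). auto. Qed.

Lemma para (a b : H) La Lb : Un_cv (fun i => hinner (Y i) a) La -> Un_cv (fun i => hinner (Y i) b) Lb ->
  hinner (hsub a b) (hsub a b) <=
    2 * (hinner a a - 2 * La - Jstar) + 2 * (hinner b b - 2 * Lb - Jstar).
Proof.
  intros Ha Hb.
  assert (Hm : Jv (hscal (1/2) (hadd a b)) (hinner (hscal (1/2) (hadd a b)) (hscal (1/2) (hadd a b)) - 2 * (1/2 * (La + Lb)))).
  { eexists. split; [apply lim_scal, lim_add; eauto| reflexivity]. }
  apply Jstar_le in Hm. isimpl. isimpl_in Hm. rewrite (hinner_sym b a) in *. nra.
Qed.

Lemma xi_cauchy : forall eps, 0 < eps -> exists N, forall m n, (N <= m)%nat -> (N <= n)%nat ->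
  sqrt (hinner (hadd (xi m) (hopp (xi n))) (hadd (xi m) (hopp (xi n)))) < eps.
Proof.
  intros eps He. destruct (small_inv (eps ^ 2 / 8)) as [N HN].
  { apply Rdiv_lt_0_compat; nra. }
  exists N. intros m n Hm Hn.
  destruct (xi_spec m) as [C1 J1]. destruct (xi_spec n) as [C2 J2].
  assert (P := para _ _ _ _ C1 C2).
  assert (Q1 := HN m Hm). assert (Q2 := HN n Hn).
  change (hnorm (hsub (xi m) (xi n)) < eps).
  assert (hinner (hsub (xi m) (xi n)) (hsub (xi m) (xi n)) < eps ^ 2) by nra.
  apply hnorm_lt_sq; auto.
Qed.


Definition zeta := proj1_sig (constructive_indefinite_description _ (hcomplete xi xi_cauchy)).
Lemma zeta_cv : cv_norm xi zeta.
Proof.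
  unfold zeta. destruct (constructive_indefinite_description _ _) as [l Hl]. simpl.
  intros eps He. destruct (Hl eps He) as [N HN]. exists N. intros n Hn. apply HN; auto.
Qed.

Lemma lim_eq w Lw : Un_cv (fun i => hinner (Y i) w) Lw -> Lw = hinner zeta w.
Proof.
  intros Hw.
  assert (Key : forall s, 2 * s * (hinner zeta w - Lw) >= - s ^ 2 * hinner w w).
  { intros s. apply Rle_ge.
    assert (Hk : forall k, 2 * s * (hinner (xi k) w - Lw) >= - / (INR k + 1) - s ^ 2 * hinner w w).
    { intros k. destruct (xi_spec k) as [Ck Jk].
      assert (Hj : Jv (hadd (xi k) (hscal s w)) (hinner (hadd (xi k) (hscal s w)) (hadd (xi k) (hscal s w)) - 2 * (Lxi k + s * Lw))).
      { eexists. split; [apply lim_add; [apply Ck| apply lim_scal, Hw]| reflexivity]. }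
      apply Jstar_le in Hj. isimpl_in Hj. rewrite (hinner_sym w (xi k)) in Hj. nra. }
    apply Rnot_lt_le. intros Hlt.
    set (g := - s ^ 2 * hinner w w - 2 * s * (hinner zeta w - Lw)).
    assert (Hg : 0 < g) by (unfold g; lra).
    destruct (small_inv (g / 2) ltac:(lra)) as [N1 HN1].
    destruct (zeta_cv (g / (2 * (2 * Rabs s * hnorm w + 1)))) as [N2 HN2].
    { apply Rdiv_lt_0_compat; [lra|]. assert (0 <= Rabs s * hnorm w) by (apply Rmult_le_pos; [apply Rabs_pos|apply hnorm_nonneg]). lra. }
    set (k := max N1 N2). specialize (Hk k). specialize (HN1 k ltac:(unfold k; lia)).
    specialize (HN2 k ltac:(unfold k; lia)).
    assert (Hd : Rabs (2 * s * (hinner (xi k) w - hinner zeta w)) <= 2 * Rabs s * hnorm w * hnorm (hsub (xi k) zeta)).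
    { replace (2 * s * (hinner (xi k) w - hinner zeta w)) with (2 * s * hinner (hsub (xi k) zeta) w) by (isimpl; ring).
      rewrite !Rabs_mult. rewrite (Rabs_right 2) by lra.
      assert (C := CS (hsub (xi k) zeta) w).
      assert (0 <= Rabs s) by apply Rabs_pos. nra. }
    assert (Hq : 2 * Rabs s * hnorm w * hnorm (hsub (xi k) zeta) < g / 2).
    { set (A := 2 * Rabs s * hnorm w). assert (HA : 0 <= A) by (unfold A; assert (0 <= Rabs s * hnorm w) by (apply Rmult_le_pos; [apply Rabs_pos|apply hnorm_nonneg]); lra).
      assert (hnorm (hsub (xi k) zeta) * (2 * (A + 1)) < g).
      { apply (Rmult_lt_compat_r (2 * (A + 1))) in HN2; [|lra].
        unfold Rdiv in HN2. rewrite Rmult_assoc, Rinv_l in HN2 by lra. lra. }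
      assert (Hn := hnorm_nonneg (hsub (xi k) zeta)). nra. }
    assert (Ha := Rle_abs (2 * s * (hinner (xi k) w - hinner zeta w))).
    assert (Ha' := Rle_abs (- (2 * s * (hinner (xi k) w - hinner zeta w)))). rewrite Rabs_Ropp in Ha'.
    unfold g in *. nra. }
  assert (Hw2 := hinner_pos w).
  set (g := hinner zeta w - Lw) in *.
  assert (G1 : - g <= 0).
  { apply (lim_small _ _ (hinner w w / 2) 1); [lra|lra|]. intros s Hs. specialize (Key s).
    assert (s * (2 * g + s * hinner w w) >= 0) by nra.
    assert (2 * g + s * hinner w w >= 0) by nra. lra. }
  assert (G2 : g <= 0).
  { apply (lim_small _ _ (hinner w w / 2) 1); [lra|lra|]. intros s Hs. specialize (Key (- s)).
    assert (s * (- 2 * g + s * hinner w w) >= 0) by nra.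
    assert (- 2 * g + s * hinner w w >= 0) by nra. lra. }
  unfold g in *. lra.
Qed.


Lemma zeta_in : Un_cv (fun i => hinner (Y i) zeta) (hinner zeta zeta).
Proof.
  intros eps He.
  assert (Hz := hnorm_nonneg zeta). assert (HB0' := HB0).
  destruct (zeta_cv (eps / (2 * (B + hnorm zeta + 1)))) as [N1 HN1].
  { apply Rdiv_lt_0_compat; lra. }
  specialize (HN1 N1 (le_n _)). set (k := N1) in *.
  destruct (xi_spec k) as [Ck _]. assert (Ek := lim_eq _ _ Ck).
  destruct (Ck (eps/2) ltac:(lra)) as [N HN]. exists N. intros i Hi. specialize (HN i Hi).
  unfold R_dist in *.
  replace (hinner (Y i) zeta - hinner zeta zeta) with
    (hinner (Y i) (hsub zeta (xi k)) + (hinner (Y i) (xi k) - Lxi k) + (hinner zeta (xi k) - hinner zeta zeta))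
    by (rewrite Ek; isimpl; ring).
  assert (Hd : hnorm (hsub (xi k) zeta) * (2 * (B + hnorm zeta + 1)) < eps).
  { apply (Rmult_lt_compat_r (2 * (B + hnorm zeta + 1))) in HN1; [|lra].
    unfold Rdiv in HN1. rewrite Rmult_assoc, Rinv_l in HN1 by lra. lra. }
  assert (C1 := CS (Y i) (hsub zeta (xi k))). rewrite hnorm_sub_sym in C1.
  assert (C2 := CS zeta (hsub (xi k) zeta)).
  replace (hinner zeta (xi k) - hinner zeta zeta) with (hinner zeta (hsub (xi k) zeta)) by (isimpl; ring).
  assert (Hn := hnorm_nonneg (hsub (xi k) zeta)). assert (HYi := HB i). assert (HYn := hnorm_nonneg (Y i)).
  assert (hnorm (Y i) * hnorm (hsub (xi k) zeta) <= B * hnorm (hsub (xi k) zeta)) by nra.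
  eapply Rle_lt_trans; [apply Rabs_triang|].
  assert (T := Rabs_triang (hinner (Y i) (hsub zeta (xi k))) (hinner (Y i) (xi k) - Lxi k)).
  nra.
Qed.

Lemma Acv_sub_lim S L : Un_cv (fun i => hinner (Y i) S) L -> forall j,
  exists L', Un_cv (fun i => hinner (Y i) (hadd S (hsub (Y j) zeta))) L'.
Proof.
  intros HS j. destruct (HY j) as [Lj HLj].
  eexists. apply lim_add; [apply HS|]. unfold hsub. apply lim_add; [apply HLj|].
  rewrite hopp_scal. apply lim_scal, zeta_in.
Qed.

Lemma no_inf (w : H) eps : 0 < eps ->
  (forall N, exists i, (N <= i)%nat /\ eps <= hinner (hsub (Y i) zeta) w) -> False.
Proof.
  intros He Hinf.
  set (Dd := B + hnorm zeta). assert (HB0' := HB0). assert (Hz := hnorm_nonneg zeta).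
  assert (Hdb : forall i, hinner (hsub (Y i) zeta) (hsub (Y i) zeta) <= Dd ^ 2).
  { intros i. rewrite <- hnorm_sq. assert (T := hnorm_triangle (Y i) (hopp zeta)).
    rewrite hnorm_opp in T. fold (hsub (Y i) zeta) in T. assert (HBi := HB i).
    assert (Hn := hnorm_nonneg (hsub (Y i) zeta)). unfold Dd. nra. }
  assert (Build : forall m, exists S, (exists L, Un_cv (fun i => hinner (Y i) S) L) /\
             hinner S S <= INR m * (Dd ^ 2 + 2) /\ INR m * eps <= hinner S w).
  { induction m.
    - exists hzero. split; [exists 0; apply lim_zero|]. rewrite !hinner_0_l. simpl. split; lra.
    - destruct IHm as [S [[L HL] [H1 H2]]].
      assert (EL := lim_eq _ _ HL).
      destruct (HL 1 ltac:(lra)) as [N HN].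
      destruct (Hinf N) as [i [Hi1 Hi2]].
      exists (hadd S (hsub (Y i) zeta)). split; [apply Acv_sub_lim with L; auto|].
      specialize (HN i Hi1). unfold R_dist in HN. rewrite EL in HN.
      assert (Hc : hinner S (hsub (Y i) zeta) < 1).
      { replace (hinner S (hsub (Y i) zeta)) with (hinner (Y i) S - hinner zeta S)
          by (isimpl; rewrite (hinner_sym S (Y i)), (hinner_sym S zeta); ring).
        assert (Ha := Rle_abs (hinner (Y i) S - hinner zeta S)). lra. }
      specialize (Hdb i). rewrite S_INR. split.
      + rewrite hinner_add_l, !hinner_add_r. rewrite (hinner_sym (hsub (Y i) zeta) S). nra.
      + rewrite hinner_add_l. nra. }
  set (K := (Dd ^ 2 + 2) * hinner w w / eps ^ 2).
  destruct (INR_unbounded (K + 1)) as [m Hm].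
  destruct (Build m) as [S [_ [H1 H2]]].
  assert (C := CS_sq S w).
  assert (Hw := hinner_pos w).
  assert (HK : K * eps ^ 2 = (Dd ^ 2 + 2) * hinner w w) by (unfold K; field; lra).
  assert (0 <= K) by (unfold K; apply Rmult_le_pos; [apply Rmult_le_pos; nra| apply Rlt_le, Rinv_0_lt_compat; nra]).
  assert (Hm0 : 0 < INR m) by lra.
  assert (Q1 : (INR m * eps) ^ 2 <= hinner S w ^ 2) by (assert (0 <= INR m * eps) by nra; nra).
  assert (Q2 : hinner S S * hinner w w <= INR m * (Dd ^ 2 + 2) * hinner w w) by nra.
  assert (Q3 : INR m * (INR m * eps ^ 2) <= INR m * (K * eps ^ 2)) by nra.
  assert (Q4 : INR m * eps ^ 2 <= K * eps ^ 2) by (apply (Rmult_le_reg_l (INR m)); lra).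
  assert (Q5 : K * eps ^ 2 < INR m * eps ^ 2).
  { apply Rmult_lt_compat_r; nra. }
  lra.
Qed.

Lemma weak_lim : cv_weak Y zeta.
Proof.
  intros w eps He. apply NNPP. intros Hno.
  assert (Hinf : forall N, exists n, (N <= n)%nat /\ eps <= Rabs (hinner (Y n) w - hinner zeta w)).
  { intros N. apply NNPP. intros Hc. apply Hno. exists N. intros n Hn.
    unfold R_dist. apply Rnot_le_lt. intros Hle. apply Hc. exists n. auto. }
  assert (Ed : forall n v, hinner (hsub (Y n) zeta) v = hinner (Y n) v - hinner zeta v)
    by (intros; isimpl; ring).
  destruct (classic (forall N, exists i, (N <= i)%nat /\ eps <= hinner (hsub (Y i) zeta) w)) as [P|P].
  - apply (no_inf w eps He P).
  - apply (no_inf (hopp w) eps He). intros N.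
    assert (P' : exists N0, forall i, (N0 <= i)%nat -> hinner (hsub (Y i) zeta) w < eps).
    { apply NNPP. intros Hc. apply P. intros N1. apply NNPP. intros Hc2. apply Hc. exists N1.
      intros i Hi. apply Rnot_le_lt. intros Hle. apply Hc2. exists i. auto. }
    destruct P' as [N0 HN0]. destruct (Hinf (max N N0)) as [n [Hn1 Hn2]].
    exists n. split; [lia|]. specialize (HN0 n ltac:(lia)). rewrite Ed in HN0.
    rewrite Ed, hopp_scal, !hinner_scal_r.
    destruct (Rcase_abs (hinner (Y n) w - hinner zeta w)) as [Hneg|Hpos].
    + rewrite Rabs_left in Hn2 by lra. lra.
    + rewrite Rabs_right in Hn2 by lra. lra.
Qed.

End WL.

Lemma weak_compact {H : Hilbert} (y : nat -> H) (B : R) : (forall n, hnorm (y n) <= B) ->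
  exists (k : nat -> nat) (z : H), (forall i, (k i < k (S i))%nat) /\ cv_weak (fun i => y (k i)) z.
Proof.
  intros HB.
  set (a := fun m n => hinner (y n) (y m)).
  assert (Ha : forall m n, Rabs (a m n) <= B * B).
  { intros m n. unfold a. eapply Rle_trans; [apply CS|]. apply Rmult_le_compat; auto; apply hnorm_nonneg. }
  assert (HY : forall j, exists L, Un_cv (fun i => hinner (y (diag a (B * B) i)) (y (diag a (B * B) j))) L).
  { intros j. apply (diag_cv a (B * B) Ha (diag a (B * B) j)). }
  eexists (diag a (B * B)), _.
  split. apply diag_incr. auto.
  apply (weak_lim _ B (fun i => HB _) HY).
Qed.

Lemma lt_div_mul (a b c : R) : 0 < c -> a < b / c -> a * c < b.
Proof.
  intros Hc Ha. apply (Rmult_lt_compat_r c) in Ha; auto.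
  replace (b / c * c) with b in Ha by (field; lra). auto.
Qed.

Lemma hnorm_sub0 {H : Hilbert} (a b : H) : hnorm (hsub a b) = 0 -> a = b.
Proof. intros E. apply veq. rewrite <- hnorm_sq, E. ring. Qed.

Section BP.
Context {H : Hilbert} (f : H -> ereal) (F : H -> R) (EF : forall y, f y = Fin (F y))
  (Hlsc : lsc f) (y0 : H) (rho m : R) (Hrho : 0 < rho)
  (Hm : forall x, hnorm (hsub x y0) <= rho -> m <= F x).

Definition Bc (x : H) := hnorm (hsub x y0) <= rho.
Definition hsq (x : H) := hinner x x.
Definition lam := rho / 2.
Definition eps0 := F y0 - m + 1.
Definition Kc := eps0 / lam ^ 2.
Definition wj (j : nat) := (1/2) ^ j.
Definition rr (i : nat) := lam * (1/2) ^ i.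
Definition eta (i : nat) := Kc * wj (S i) * rr (S i) ^ 2.

Lemma Bc_y0 : Bc y0.
Proof. unfold Bc. rewrite hsub_diag, hnorm_zero. lra. Qed.

Lemma eps0_pos : 1 <= eps0.
Proof. unfold eps0. assert (Hy := Hm y0 Bc_y0). lra. Qed.

Lemma lam_pos : 0 < lam.
Proof. unfold lam. lra. Qed.

Lemma Kc_pos : 0 < Kc.
Proof. unfold Kc. assert (H1 := eps0_pos). assert (H2 := lam_pos). apply Rdiv_lt_0_compat; nra. Qed.

Lemma half_pow_pos j : 0 < (1/2) ^ j.
Proof. apply pow_lt. lra. Qed.

Lemma wj_pos j : 0 < wj j.
Proof. apply half_pow_pos. Qed.

Lemma rr_pos i : 0 < rr i.
Proof. unfold rr. assert (H1 := lam_pos). assert (H2 := half_pow_pos i). nra. Qed.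

Lemma eta_pos i : 0 < eta i.
Proof.
  unfold eta. assert (H1 := Kc_pos). assert (H2 := wj_pos (S i)). assert (H3 := rr_pos (S i)).
  assert (0 < rr (S i) ^ 2) by nra. assert (0 < Kc * wj (S i)) by nra. nra.
Qed.

Definition Pnear (G : H -> R) (x : H) (et : R) (y : H) :=
  Bc y /\ G y <= G x /\ forall z, Bc z -> G z <= G x -> G y <= G z + et.

Lemma near_min (G : H -> R) (x : H) (et : R) : Bc x -> (forall z, Bc z -> m <= G z) -> 0 < et ->
  exists y, Pnear G x et y.
Proof.
  intros Hx Hlb Het. apply NNPP. intros Hn.
  assert (Step : forall y, Bc y -> G y <= G x -> exists z, Bc z /\ G z <= G x /\ G z < G y - et).
  { intros y Hy Hyx. apply NNPP. intros Hc. apply Hn. exists y. split; [auto|split; auto].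
    intros z Hz Hzx. apply Rnot_lt_le. intros Hlt. apply Hc. exists z. split; auto. split; auto. lra. }
  assert (Iter : forall k : nat, exists z, Bc z /\ G z <= G x - INR k * et).
  { induction k. exists x. simpl. split; auto. lra.
    destruct IHk as [z [Hz Hzk]].
    assert (Hzx : G z <= G x) by (assert (0 <= INR k * et) by (apply Rmult_le_pos; [apply pos_INR|lra]); lra).
    destruct (Step z Hz Hzx) as [z' [Hz' [_ Hlt]]]. exists z'. split; auto. rewrite S_INR. lra. }
  destruct (INR_unbounded ((G x - m) / et)) as [k Hk].
  destruct (Iter k) as [z [Hz Hzk]]. assert (Hlbz := Hlb z Hz).
  assert (INR k * et > G x - m).
  { apply Rmult_gt_compat_r with (r := et) in Hk; [|lra].
    unfold Rdiv in Hk. rewrite Rmult_assoc, Rinv_l in Hk by lra. lra. }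
  lra.
Qed.

Definition pick (G : H -> R) (x : H) (et : R) : H :=
  match excluded_middle_informative (exists y, Pnear G x et y) with
  | left h => proj1_sig (constructive_indefinite_description _ h)
  | right _ => x
  end.

Lemma pick_spec G x et : Bc x -> (forall z, Bc z -> m <= G z) -> 0 < et -> Pnear G x et (pick G x et).
Proof.
  intros Hx Hlb Het. unfold pick. destruct (excluded_middle_informative _) as [h|h].
  - destruct (constructive_indefinite_description _ h). auto.
  - exfalso. apply h. apply near_min; auto.
Qed.

Fixpoint st (i : nat) : H * (H -> R) :=
  match i with
  | O => (y0, F)
  | S i' => let p := st i' in
            let G' := fun z => snd p z + Kc * wj i' * hsq (hsub z (fst p)) in
            (pick G' (fst p) (eta i'), G')
  end.

Definition xs i := fst (st i).
Definition GG i := snd (st i).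

Lemma GG_S i z : GG (S i) z = GG i z + Kc * wj i * hsq (hsub z (xs i)).
Proof. reflexivity. Qed.
Lemma xs_S i : xs (S i) = pick (GG (S i)) (xs i) (eta i).
Proof. reflexivity. Qed.
Lemma GG_0 z : GG O z = F z.
Proof. reflexivity. Qed.

Lemma hsq_pos z : 0 <= hsq z.
Proof. apply hinner_pos. Qed.

Lemma GG_ge_F i z : F z <= GG i z.
Proof.
  induction i. unfold GG; simpl; lra. rewrite GG_S.
  assert (0 <= Kc * wj i * hsq (hsub z (xs i))).
  { assert (H1 := Kc_pos). assert (H2 := wj_pos i). assert (H3 := hsq_pos (hsub z (xs i))).
    apply Rmult_le_pos; [nra|auto]. }
  lra.
Qed.

Lemma GG_mono i z : GG i z <= GG (S i) z.
Proof.
  rewrite GG_S. assert (H1 := Kc_pos). assert (H2 := wj_pos i). assert (H3 := hsq_pos (hsub z (xs i))).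
  assert (0 <= Kc * wj i * hsq (hsub z (xs i))) by (apply Rmult_le_pos; [nra|auto]). lra.
Qed.

Lemma GG_mono_le i j z : (i <= j)%nat -> GG i z <= GG j z.
Proof.
  intros Hij. induction Hij. lra. eapply Rle_trans; [apply IHHij| apply GG_mono].
Qed.

Lemma GG_lb i z : Bc z -> m <= GG i z.
Proof. intros Hz. eapply Rle_trans; [apply Hm, Hz| apply GG_ge_F]. Qed.

Lemma GG_S_self i : GG (S i) (xs i) = GG i (xs i).
Proof. rewrite GG_S. unfold hsq. rewrite hsub_diag, hinner_0_l. ring. Qed.

Lemma xs_spec i : Bc (xs i) /\ (forall j, j = S i -> Pnear (GG j) (xs i) (eta i) (xs j)).
Proof.
  induction i.
  - split. apply Bc_y0. intros j ->. rewrite xs_S. apply pick_spec.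
    apply Bc_y0. intros; apply GG_lb; auto. apply eta_pos.
  - destruct IHi as [Hb Hp]. assert (Hb' : Bc (xs (S i))) by (apply (Hp (S i) eq_refl)).
    split; auto. intros j ->. rewrite (xs_S (S i)). apply pick_spec; auto.
    intros; apply GG_lb; auto. apply eta_pos.
Qed.

Lemma xs_Bc i : Bc (xs i).
Proof. apply xs_spec. Qed.

Lemma xs_near i : Pnear (GG (S i)) (xs i) (eta i) (xs (S i)).
Proof. apply (proj2 (xs_spec i)). auto. Qed.

Definition memS (i : nat) (z : H) := Bc z /\ GG (S i) z <= GG (S i) (xs i).

Lemma memS_self i : memS i (xs i).
Proof. split. apply xs_Bc. lra. Qed.

Lemma memS_next i : memS i (xs (S i)).
Proof. destruct (xs_near i) as [H1 [H2 _]]. split; auto. Qed.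

Lemma memS_down i z : memS (S i) z -> memS i z.
Proof.
  intros [Hb Hz]. split; auto.
  assert (A := GG_mono (S i) z). rewrite (GG_S_self (S i)) in Hz.
  destruct (xs_near i) as [_ [H2 _]]. lra.
Qed.

Lemma memS_down_le i j z : (i <= j)%nat -> memS j z -> memS i z.
Proof. intros Hij. induction Hij; auto. intros Hz. apply IHHij, memS_down, Hz. Qed.

Lemma memS_xs i j : (i <= j)%nat -> memS i (xs j).
Proof.
  intros Hij. destruct (Nat.eq_dec i j) as [->|Hne]. apply memS_self.
  destruct j. lia. apply memS_down_le with j. lia. apply memS_next.
Qed.

Lemma memS_diam i z : memS (S i) z -> hnorm (hsub z (xs (S i))) <= rr (S i).
Proof.
  intros Hz. assert (Hz' := memS_down _ _ Hz). destruct Hz as [Hb Hz]. destruct Hz' as [_ Hz2].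
  rewrite (GG_S (S i)) in Hz. rewrite GG_S_self in Hz.
  destruct (xs_near i) as [_ [_ H3]]. specialize (H3 z Hb Hz2).
  assert (Kc * wj (S i) * hsq (hsub z (xs (S i))) <= Kc * wj (S i) * rr (S i) ^ 2) by (unfold eta in H3; lra).
  assert (H1 := Kc_pos). assert (H2 := wj_pos (S i)).
  assert (hsq (hsub z (xs (S i))) <= rr (S i) ^ 2).
  { apply (Rmult_le_reg_l (Kc * wj (S i))). nra. lra. }
  apply hnorm_le_sq; auto. apply Rlt_le, rr_pos.
Qed.

Lemma rr_small eps : 0 < eps -> exists i, rr i < eps.
Proof.
  intros He. destruct (pow_lt_1_zero (1/2) ltac:(rewrite Rabs_right; lra) (eps / lam)) as [N HN].
  { apply Rdiv_lt_0_compat; auto. apply lam_pos. }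
  exists N. specialize (HN N (le_n _)). rewrite Rabs_right in HN by (apply Rle_ge, Rlt_le, half_pow_pos).
  unfold rr. assert (Hl := lam_pos).
  apply (Rmult_lt_compat_l lam) in HN; auto. unfold Rdiv in HN. rewrite <- Rmult_assoc, (Rmult_comm lam eps), Rmult_assoc, Rinv_r in HN by lra. lra.
Qed.

Lemma xs_cauchy : forall eps, 0 < eps -> exists N, forall m n, (N <= m)%nat -> (N <= n)%nat ->
  sqrt (hinner (hadd (xs m) (hopp (xs n))) (hadd (xs m) (hopp (xs n)))) < eps.
Proof.
  intros eps He. destruct (rr_small (eps/2) ltac:(lra)) as [i Hi].
  assert (Hr : rr (S i) <= rr i).
  { unfold rr. simpl. assert (H1 := lam_pos). assert (H2 := half_pow_pos i). nra. }
  exists (S i). intros a b Ha Hb. change (hnorm (hsub (xs a) (xs b)) < eps).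
  assert (Da := memS_diam i _ (memS_xs (S i) a Ha)).
  assert (Db := memS_diam i _ (memS_xs (S i) b Hb)).
  assert (T := hnorm_sub_tri (xs a) (xs (S i)) (xs b)). rewrite (hnorm_sub_sym (xs (S i))) in T. lra.
Qed.

Definition vlim := proj1_sig (constructive_indefinite_description _ (hcomplete xs xs_cauchy)).
Lemma vlim_cv : cv_norm xs vlim.
Proof.
  unfold vlim. destruct (constructive_indefinite_description _ _) as [l Hl]. simpl.
  intros eps He. destruct (Hl eps He) as [N HN]. exists N. intros n Hn. apply HN; auto.
Qed.


Lemma memS0_bound z : memS O z -> hnorm (hsub z y0) < lam.
Proof.
  intros [Hb Hz]. rewrite GG_S_self, GG_S in Hz. unfold GG in Hz. simpl in Hz.
  unfold xs in Hz. simpl in Hz.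
  assert (Hmz := Hm z Hb). assert (He := eps0_pos). assert (HK := Kc_pos). assert (Hl := lam_pos).
  unfold wj in Hz. simpl in Hz.
  assert (Hq : Kc * hsq (hsub z y0) <= eps0 - 1) by (unfold eps0; lra).
  apply hnorm_lt_sq; auto. fold (hsq (hsub z y0)).
  assert (Kc * lam ^ 2 = eps0) by (unfold Kc; field; lra).
  assert (Kc * hsq (hsub z y0) < Kc * lam ^ 2) by lra.
  apply (Rmult_lt_reg_l Kc); auto.
Qed.

Lemma vlim_near : hnorm (hsub vlim y0) <= lam.
Proof.
  apply Rnot_lt_le. intros Hlt.
  destruct (vlim_cv (hnorm (hsub vlim y0) - lam) ltac:(lra)) as [N HN].
  specialize (HN N (le_n _)). assert (B1 := memS0_bound _ (memS_xs O N ltac:(lia))).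
  assert (T := hnorm_sub_tri vlim (xs N) y0). rewrite hnorm_sub_sym in HN. lra.
Qed.

Lemma vlim_Bc : Bc vlim.
Proof. unfold Bc. assert (V := vlim_near). unfold lam in V. lra. Qed.

Fixpoint Wsum (N : nat) : R := match N with O => 0 | S N' => Wsum N' + wj N' end.
Fixpoint qsum (N : nat) : H :=
  match N with O => hzero | S N' => hadd (qsum N') (hscal (wj N') (hsub vlim (xs N'))) end.

Lemma Wsum_eq N : Wsum N = 2 - 2 * (1/2) ^ N.
Proof. induction N. simpl Wsum. simpl pow. lra. change (Wsum (S N)) with (Wsum N + wj N). rewrite IHN. unfold wj. simpl pow. lra. Qed.

Lemma Wsum_bd N : 0 <= Wsum N <= 2.
Proof. rewrite Wsum_eq. assert (H1 := half_pow_pos N). assert ((1/2)^N <= 1) by (apply Rle_trans with (1^N); [apply pow_incr; lra| rewrite pow1; lra]). lra. Qed.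

Lemma GG_iden N z : GG N z - GG N vlim =
  F z - F vlim + Kc * Wsum N * hsq (hsub z vlim) + 2 * Kc * hinner (hsub z vlim) (qsum N).
Proof.
  induction N.
  - unfold GG. simpl. rewrite hinner_0_r. ring.
  - rewrite !GG_S. simpl qsum. simpl Wsum.
    replace (GG N z + Kc * wj N * hsq (hsub z (xs N)) - (GG N vlim + Kc * wj N * hsq (hsub vlim (xs N))))
      with ((GG N z - GG N vlim) + Kc * wj N * (hsq (hsub z (xs N)) - hsq (hsub vlim (xs N)))) by ring.
    rewrite IHN. unfold hsq. isimpl.
    rewrite ?(hinner_sym vlim z), ?(hinner_sym (xs N) z), ?(hinner_sym (xs N) vlim),
      ?(hinner_sym (qsum N) z), ?(hinner_sym (qsum N) vlim). ring.
Qed.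

Lemma memS_vlim i : memS i vlim.
Proof.
  split. apply vlim_Bc. apply Rnot_lt_le. intros Hlt.
  assert (Hg : 0 < GG (S i) vlim - GG (S i) (xs i)) by lra.
  set (gap := GG (S i) vlim - GG (S i) (xs i)) in *.
  destruct (Hlsc vlim (F vlim - gap/2)) as [d [Hd Hball]].
  { rewrite EF. simpl. lra. }
  set (Q := hnorm (qsum (S i))). assert (HQ : 0 <= Q) by apply hnorm_nonneg.
  assert (HK := Kc_pos).
  set (e := Rmin d (gap / (4 * Kc * (Q + 1)))).
  assert (He : 0 < e).
  { unfold e. apply Rmin_glb_lt; auto. apply Rdiv_lt_0_compat; auto. nra. }
  destruct (vlim_cv e He) as [J HJ].
  set (j := max J i). specialize (HJ j ltac:(unfold j; lia)).
  assert (Hmem := memS_xs i j ltac:(unfold j; lia)). destruct Hmem as [_ Hmem].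
  assert (Hj1 : hnorm (hsub (xs j) vlim) < d) by (eapply Rlt_le_trans; [apply HJ| apply Rmin_l]).
  assert (Hj2 : hnorm (hsub (xs j) vlim) < gap / (4 * Kc * (Q + 1)))
    by (eapply Rlt_le_trans; [apply HJ| apply Rmin_r]).
  specialize (Hball (xs j) Hj1). rewrite EF in Hball. simpl in Hball.
  assert (Id := GG_iden (S i) (xs j)).
  assert (W := Wsum_bd (S i)). assert (Hs := hsq_pos (hsub (xs j) vlim)).
  assert (C := CS_ge (hsub (xs j) vlim) (qsum (S i))). fold Q in C.
  assert (Hn := hnorm_nonneg (hsub (xs j) vlim)).
  assert (hnorm (hsub (xs j) vlim) * (4 * Kc * (Q + 1)) < gap).
  { apply lt_div_mul; auto. nra. }
  assert (0 <= Kc * Wsum (S i) * hsq (hsub (xs j) vlim)).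
  { apply Rmult_le_pos; [nra|auto]. }
  assert (2 * Kc * (hnorm (hsub (xs j) vlim) * Q) <= gap / 2) by nra.
  unfold gap in *. nra.
Qed.

Lemma T_mono i j : (i <= j)%nat -> GG (S j) (xs j) <= GG (S i) (xs i).
Proof.
  intros Hij. induction Hij. lra.
  eapply Rle_trans; [|apply IHHij]. rewrite GG_S_self.
  destruct (xs_near m0) as [_ [H2 _]]. lra.
Qed.

Lemma GG_vlim_min z : Bc z -> exists N0, forall N, (N0 <= N)%nat -> GG N vlim <= GG N z.
Proof.
  intros Hz. destruct (classic (forall i, memS i z)) as [Hall|Hex].
  - assert (E : z = vlim).
    { apply hnorm_sub0. apply Rle_antisym; [|apply hnorm_nonneg].
      apply Rnot_lt_le. intros Hlt.
      destruct (rr_small (hnorm (hsub z vlim) / 2) ltac:(lra)) as [i Hi].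
      assert (D1 := memS_diam i z (Hall (S i))). assert (D2 := memS_diam i vlim (memS_vlim (S i))).
      assert (Hr : rr (S i) <= rr i).
      { unfold rr. simpl. assert (H1 := lam_pos). assert (H2 := half_pow_pos i). nra. }
      assert (T := hnorm_sub_tri z (xs (S i)) vlim). rewrite (hnorm_sub_sym (xs (S i)) vlim) in T. lra. }
    subst. exists O. intros. lra.
  - apply not_all_ex_not in Hex. destruct Hex as [i Hi].
    assert (Hgt : GG (S i) (xs i) < GG (S i) z).
    { apply Rnot_le_lt. intros Hle. apply Hi. split; auto. }
    exists (S i). intros N HN. destruct N as [|j]. lia.
    assert (A1 := GG_mono_le (S i) (S j) z HN).
    destruct (memS_vlim j) as [_ A2]. assert (A3 := T_mono i j ltac:(lia)). lra.
Qed.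

Lemma vx_bound j : hnorm (hsub vlim (xs j)) <= rho.
Proof.
  assert (A := vlim_near). assert (B1 := memS0_bound _ (memS_xs O j ltac:(lia))).
  assert (T := hnorm_sub_tri vlim y0 (xs j)). rewrite (hnorm_sub_sym y0) in T. unfold lam in *. lra.
Qed.

Lemma qsum_tail N k : hnorm (hsub (qsum (k + N)) (qsum N)) <= 2 * rho * ((1/2) ^ N - (1/2) ^ (k + N)).
Proof.
  induction k.
  - simpl. rewrite hsub_diag, hnorm_zero. lra.
  - simpl plus. simpl qsum.
    replace (hsub (hadd (qsum (k + N)) (hscal (wj (k + N)) (hsub vlim (xs (k + N))))) (qsum N))
      with (hadd (hsub (qsum (k + N)) (qsum N)) (hscal (wj (k + N)) (hsub vlim (xs (k + N)))))
      by (apply veq; isimpl; ring).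
    eapply Rle_trans; [apply hnorm_triangle|]. rewrite hnorm_scal, Rabs_right by (apply Rle_ge, Rlt_le, wj_pos).
    assert (V := vx_bound (k + N)). assert (Hw := wj_pos (k + N)). unfold wj in *.
    assert ((1/2) ^ (k + N) * hnorm (hsub vlim (xs (k + N))) <= (1/2) ^ (k + N) * rho)
      by (apply Rmult_le_compat_l; lra).
    simpl pow. lra.
Qed.

Lemma qsum_cauchy : forall eps, 0 < eps -> exists N, forall m n, (N <= m)%nat -> (N <= n)%nat ->
  sqrt (hinner (hadd (qsum m) (hopp (qsum n))) (hadd (qsum m) (hopp (qsum n)))) < eps.
Proof.
  intros eps He.
  destruct (pow_lt_1_zero (1/2) ltac:(rewrite Rabs_right; lra) (eps / (4 * rho))) as [N HN].
  { apply Rdiv_lt_0_compat; lra. }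
  exists N. intros a b Ha Hb. change (hnorm (hsub (qsum a) (qsum b)) < eps).
  specialize (HN N (le_n _)). rewrite Rabs_right in HN by (apply Rle_ge, Rlt_le, half_pow_pos).
  assert (Ta := qsum_tail N (a - N)). assert (Tb := qsum_tail N (b - N)).
  replace (a - N + N)%nat with a in Ta by lia. replace (b - N + N)%nat with b in Tb by lia.
  assert (Pa := half_pow_pos a). assert (Pb := half_pow_pos b).
  assert (T := hnorm_sub_tri (qsum a) (qsum N) (qsum b)). rewrite (hnorm_sub_sym (qsum N)) in T.
  assert ((1/2)^N * (4 * rho) < eps).
  { apply (Rmult_lt_compat_r (4 * rho)) in HN; [|lra].
    unfold Rdiv in HN. rewrite Rmult_assoc, Rinv_l in HN by lra. lra. }
  nra.
Qed.

Definition qlim := proj1_sig (constructive_indefinite_description _ (hcomplete qsum qsum_cauchy)).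
Lemma qlim_cv : cv_norm qsum qlim.
Proof.
  unfold qlim. destruct (constructive_indefinite_description _ _) as [l Hl]. simpl.
  intros eps He. destruct (Hl eps He) as [N HN]. exists N. intros n Hn. apply HN; auto.
Qed.

Lemma prox_density : exists v p, hnorm (hsub v y0) < rho /\ prox_subdiff f v p.
Proof.
  exists vlim, (hscal (- 2 * Kc) qlim). split.
  { assert (V := vlim_near). unfold lam in V. lra. }
  exists (F vlim). split; auto.
  exists (4 * Kc), (rho / 2). assert (HK := Kc_pos). split; [lra|split; [lra|]].
  intros y Hy. rewrite EF. cbn [ele].
  assert (Hby : Bc y).
  { unfold Bc. assert (V := vlim_near). unfold lam in V.
    assert (T := hnorm_sub_tri y vlim y0). lra. }
  destruct (GG_vlim_min y Hby) as [N0 HN0].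
  rewrite hinner_scal_l, hnorm_sq. fold (hsq (hsub y vlim)).
  assert (Hs := hsq_pos (hsub y vlim)).
  set (Ny := hnorm (hsub y vlim)). assert (Hny : 0 <= Ny) by apply hnorm_nonneg.
  assert (Key : forall eta', 0 < eta' ->
    - 2 * Kc * hinner qlim (hsub y vlim) - 2 * Kc * hsq (hsub y vlim) <= F y - F vlim + 2 * Kc * Ny * eta').
  { intros eta' He'. destruct (qlim_cv eta' He') as [N1 HN1].
    set (N := max N0 N1). specialize (HN0 N ltac:(unfold N; lia)). specialize (HN1 N ltac:(unfold N; lia)).
    assert (Id := GG_iden N y). assert (W := Wsum_bd N).
    assert (Kc * Wsum N * hsq (hsub y vlim) <= 2 * Kc * hsq (hsub y vlim)).
    { assert (Kc * hsq (hsub y vlim) >= 0) by nra. nra. }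
    assert (C := CS (hsub y vlim) (hsub (qsum N) qlim)). fold Ny in C.
    replace (hinner (hsub y vlim) (qsum N)) with
      (hinner qlim (hsub y vlim) + hinner (hsub y vlim) (hsub (qsum N) qlim)) in Id
      by (isimpl; rewrite ?(hinner_sym qlim y), ?(hinner_sym qlim vlim); ring).
    assert (A := Rle_abs (hinner (hsub y vlim) (hsub (qsum N) qlim))).
    assert (Ny * hnorm (hsub (qsum N) qlim) <= Ny * eta') by (apply Rmult_le_compat_l; lra).
    assert (2 * Kc * (hinner (hsub y vlim) (hsub (qsum N) qlim)) <= 2 * Kc * (Ny * eta')) by nra.
    lra. }
  assert (Hf : - 2 * Kc * hinner qlim (hsub y vlim) - 2 * Kc * hsq (hsub y vlim) <= F y - F vlim).
  { apply (lim_small _ _ (2 * Kc * Ny) 1); [lra| nra|]. intros s Hs'. specialize (Key s ltac:(lra)). nra. }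
  lra.
Qed.

End BP.

Lemma Rle_div_l (a b c : R) : 0 < c -> a <= b * c -> a / c <= b.
Proof. intros Hc Hab. apply (Rmult_le_reg_r c); auto. replace (a / c * c) with a by (field; lra). auto. Qed.

Section Main.
Context {H : Hilbert} (f : H -> ereal) (xb : H) (c : R) (Hc : 0 < c)
  (Hconc : concave (shift_sq f c)) (fxb : R) (Efxb : f xb = Fin fxb)
  (H0 : prox_subdiff f xb hzero) (F : H -> R) (EF : forall y, f y = Fin (F y))
  (b0 d0 : R) (Hb0 : 0 < b0) (Hd0 : 0 < d0)
  (Hmin : forall x, hnorm (hsub x xb) < d0 -> fxb + b0 / 2 * hnorm (hsub x xb) ^ 2 <= F x).

Definition D (t : R) (u : H) : R := (F (hadd xb (hscal t u)) - fxb) * (2 / t ^ 2).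

Lemma Delta2_D t u : 0 < t -> Delta2 f xb hzero t u = Fin (D t u).
Proof.
  intros Ht. unfold Delta2, D. rewrite Efxb, EF, hinner_0_l. f_equal. field. lra.
Qed.

Lemma FxbE : F xb = fxb.
Proof. rewrite EF in Efxb. injection Efxb. auto. Qed.

Lemma sc (x p : H) : prox_subdiff f x p -> forall y,
  F y <= F x + hinner p (hsub y x) + c * hnorm (hsub y x) ^ 2.
Proof.
  intros Hp y. destruct (semiconcave_bound f c Hc Hconc x p (F x) (EF x) Hp y) as [fy [E Hle]].
  rewrite EF in E. injection E as ->. auto.
Qed.

Lemma upper_xb y : F y <= fxb + c * hnorm (hsub y xb) ^ 2.
Proof. assert (S := sc xb hzero H0 y). rewrite hinner_0_l, FxbE in S. lra. Qed.

Lemma hsub_shift (x : H) t v : hsub (hadd x (hscal t v)) x = hscal t v.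
Proof. apply veq. isimpl. ring. Qed.

Lemma hsub_shift2 t v w : hsub (hadd xb (hscal t v)) (hadd xb (hscal t w)) = hscal t (hsub v w).
Proof. apply veq. isimpl. ring. Qed.

Lemma D_upper t u : 0 < t -> D t u <= 2 * c * hnorm u ^ 2.
Proof.
  intros Ht. unfold D. assert (U := upper_xb (hadd xb (hscal t u))).
  rewrite hsub_shift, hnorm_scal, Rabs_right in U by lra.
  assert (0 < 2 / t^2) by (apply Rdiv_lt_0_compat; nra).
  apply Rle_trans with ((c * (t * hnorm u) ^ 2) * (2 / t^2)).
  apply Rmult_le_compat_r; lra. right. field. lra.
Qed.

Lemma D_lower t u : 0 < t -> t * hnorm u < d0 -> b0 * hnorm u ^ 2 <= D t u.
Proof.
  intros Ht Hu. unfold D. assert (L := Hmin (hadd xb (hscal t u))).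
  rewrite hsub_shift, hnorm_scal, Rabs_right in L by lra. specialize (L Hu).
  assert (0 < 2 / t^2) by (apply Rdiv_lt_0_compat; nra).
  apply Rle_trans with ((b0 / 2 * (t * hnorm u) ^ 2) * (2 / t^2)).
  right. field. lra. apply Rmult_le_compat_r; lra.
Qed.

Lemma first_kind : soc_first_kind f xb.
Proof.
  exists b0. split; auto. intros h Hh eps He.
  set (dl := Rmin 1 (Rmin (eps / (2 * b0)) (d0 / 3))).
  assert (Hdl1 : dl <= 1) by apply Rmin_l.
  assert (Hdl2 : dl <= eps / (2 * b0)) by (eapply Rle_trans; [apply Rmin_r| apply Rmin_l]).
  assert (Hdl3 : dl <= d0 / 3) by (eapply Rle_trans; [apply Rmin_r| apply Rmin_r]).
  assert (Hdl : 0 < dl).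
  { unfold dl. repeat apply Rmin_glb_lt; try lra. apply Rdiv_lt_0_compat; lra. }
  exists dl. split; auto. intros h' t Hh' Ht.
  rewrite Delta2_D by lra. simpl.
  assert (R1 := hnorm_rev_tri h h'). rewrite hnorm_sub_sym in R1.
  assert (T1 := hnorm_triangle (hsub h' h) h).
  replace (hadd (hsub h' h) h) with h' in T1 by (apply veq; isimpl; ring).
  assert (Hn := hnorm_nonneg h').
  assert (Hb : t * hnorm h' < d0) by nra.
  assert (L := D_lower t h' ltac:(lra) Hb).
  assert (eps >= 2 * b0 * dl).
  { apply (Rmult_le_compat_l (2 * b0)) in Hdl2; [|lra].
    replace (2 * b0 * (eps / (2 * b0))) with eps in Hdl2 by (field; lra). lra. }
  assert (hnorm h' ^ 2 >= 1 - 2 * dl) by nra.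
  nra.
Qed.

Lemma D_sc t hs zs v : 0 < t ->
  prox_subdiff f (hadd xb (hscal t hs)) (hadd hzero (hscal t zs)) ->
  D t v <= D t hs + 2 * hinner zs (hsub v hs) + 2 * c * hnorm (hsub v hs) ^ 2.
Proof.
  intros Ht Hp. assert (S := sc _ _ Hp (hadd xb (hscal t v))).
  rewrite hsub_shift2, hadd_0_l, hnorm_scal, Rabs_right, hinner_scal_l, hinner_scal_r in S by lra.
  unfold D. set (k := 2 / t ^ 2). assert (Hk : k * t ^ 2 = 2) by (unfold k; field; lra).
  assert (0 < k) by (unfold k; apply Rdiv_lt_0_compat; nra).
  set (A := F (hadd xb (hscal t v))) in *. set (B := F (hadd xb (hscal t hs))) in *.
  assert (k * A <= k * (B + t * (t * hinner zs (hsub v hs)) + c * (t * hnorm (hsub v hs)) ^ 2))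
    by (apply Rmult_le_compat_l; lra).
  replace (2 * hinner zs (hsub v hs)) with (k * t^2 * hinner zs (hsub v hs)) by (rewrite Hk; ring).
  replace (2 * c * hnorm (hsub v hs) ^ 2) with (k * t^2 * c * hnorm (hsub v hs) ^ 2) by (rewrite Hk; ring).
  nra.
Qed.

Lemma D_mid t a u : 0 < t ->
  D t a <= 2 * D t u - D t (hsub (hscal 2 u) a) + 4 * c * hnorm (hsub a u) ^ 2.
Proof.
  intros Ht.
  set (X := hadd xb (hscal t a)). set (Y := hadd xb (hscal t (hsub (hscal 2 u) a))).
  set (M := hadd xb (hscal t u)).
  assert (HX := ele_shift f c X (F X) ltac:(rewrite EF; simpl; lra)).
  assert (HY := ele_shift f c Y (F Y) ltac:(rewrite EF; simpl; lra)).
  assert (Hcv := Hconc X Y _ _ (1/2) ltac:(lra) HX HY).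
  replace (hadd (hscal (1 / 2) X) (hscal (1 - 1 / 2) Y)) with M in Hcv.
  2:{ apply veq. unfold X, Y, M. isimpl. field. }
  unfold shift_sq in Hcv. rewrite EF in Hcv. simpl in Hcv.
  assert (Iden : hinner X X + hinner Y Y - 2 * hinner M M = 2 * t^2 * hinner (hsub a u) (hsub a u)).
  { unfold X, Y, M. isimpl. rewrite ?(hinner_sym a xb), ?(hinner_sym u xb), ?(hinner_sym u a). ring. }
  assert (N1 : forall z : H, hnorm z * (hnorm z * 1) = hinner z z)
      by (intros; rewrite Rmult_1_r; apply hnorm_sq').
  rewrite !N1 in Hcv. rewrite hnorm_sq.
  unfold D. fold X Y M. set (k := 2 / t ^ 2). assert (Hk : k * t ^ 2 = 2) by (unfold k; field; lra).
  assert (0 < k) by (unfold k; apply Rdiv_lt_0_compat; nra).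
  assert (k * (F X + F Y - 2 * F M) <= k * (2 * c * t^2 * hinner (hsub a u) (hsub a u)))
    by (apply Rmult_le_compat_l; nra).
  replace (4 * c * hinner (hsub a u) (hsub a u)) with (k * (2 * c * t^2 * hinner (hsub a u) (hsub a u)))
    by (replace (k * (2 * c * t ^ 2 * hinner (hsub a u) (hsub a u))) with
          ((k * t^2) * (2 * c * hinner (hsub a u) (hsub a u))) by ring; rewrite Hk; ring).
  nra.
Qed.

Lemma D_scale t s u : 0 < t -> 0 < s -> D (s * t) u * s ^ 2 = D t (hscal s u).
Proof.
  intros Ht Hs. unfold D. rewrite hscal_assoc. replace (t * s) with (s * t) by ring. field. lra.
Qed.

Lemma grad_bound (x p : H) (tau : R) : prox_subdiff f x p -> 0 < tau ->
  hnorm (hsub x xb) + tau < d0 ->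
  hnorm p <= c * (hnorm (hsub x xb) ^ 2 + tau ^ 2) / tau.
Proof.
  intros Hp Ht Hx. apply norm_bound_of_inner. intros e He.
  set (y := hadd x (hscal tau e)).
  assert (Ty : hnorm (hsub y xb) < d0).
  { replace (hsub y xb) with (hadd (hsub x xb) (hscal tau e)) by (apply veq; unfold y; isimpl; ring).
    eapply Rle_lt_trans; [apply hnorm_triangle|]. rewrite hnorm_scal, Rabs_right by lra.
    assert (Hn := hnorm_nonneg e). nra. }
  assert (L := Hmin y Ty). assert (Hq : 0 <= hnorm (hsub y xb) ^ 2) by nra.
  assert (S := sc x p Hp y). unfold y in S. rewrite hsub_shift, hnorm_scal, Rabs_right, hinner_scal_r in S by lra.
  assert (U := upper_xb x). fold y in S.
  assert (Hn := hnorm_nonneg e).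
  assert (c * (tau * hnorm e) ^ 2 <= c * tau ^ 2).
  { apply Rmult_le_compat_l; [lra|]. rewrite Rpow_mult_distr. 
    assert (hnorm e ^ 2 <= 1) by nra. assert (0 <= tau^2) by nra. nra. }
  assert (tau * hinner p e >= - c * (hnorm (hsub x xb) ^ 2 + tau ^ 2)) by nra.
  assert (hinner p e >= - (c * (hnorm (hsub x xb) ^ 2 + tau ^ 2) / tau)).
  { apply Rle_ge, (Rmult_le_reg_l tau); [lra|].
    replace (tau * - (c * (hnorm (hsub x xb) ^ 2 + tau ^ 2) / tau)) with
      (- c * (hnorm (hsub x xb) ^ 2 + tau ^ 2)) by (field; lra). lra. }
  lra.
Qed.


Lemma dom_full (Hlsc : lsc f) (u : H) : exists zeta, TM f xb hzero u zeta.
Proof.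
  set (U := hnorm u). assert (HU : 0 <= U) by apply hnorm_nonneg.
  set (t := fun n : nat => d0 / ((U + 2) * (INR n + 2))).
  assert (Hn2 : forall n, 0 < INR n + 2) by (intros; generalize (pos_INR n); lra).
  assert (Ht : forall n, 0 < t n).
  { intros n. unfold t. apply Rdiv_lt_0_compat; auto. specialize (Hn2 n). nra. }
  set (rh := fun n : nat => t n / (INR n + 1)).
  assert (Hn1 : forall n, 0 < INR n + 1) by (intros; generalize (pos_INR n); lra).
  assert (Hrh : forall n, 0 < rh n) by (intros; unfold rh; apply Rdiv_lt_0_compat; auto).
  assert (Hrh1 : forall n, rh n <= t n).
  { intros n. unfold rh. apply Rle_div_l; auto. specialize (Ht n). generalize (pos_INR n). nra. }
  set (yc := fun n => hadd xb (hscal (t n) u)).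
  assert (Htd : forall n, t n * (U + 2) < d0).
  { intros n. unfold t. cbv beta. specialize (Hn2 n).
    replace (d0 / ((U + 2) * (INR n + 2)) * (U + 2)) with (d0 / (INR n + 2)) by (field; split; lra).
    apply Rlt_le_trans with (d0 / 1); [|lra]. unfold Rdiv. apply Rmult_lt_compat_l; auto.
    apply Rinv_lt_contravar; [lra|]. generalize (pos_INR n). lra. }
  assert (Hyc : forall n x, hnorm (hsub x (yc n)) <= rh n -> hnorm (hsub x xb) <= t n * (U + 1)).
  { intros n x Hx. assert (T := hnorm_sub_tri x (yc n) xb). unfold yc in T at 2.
    rewrite hsub_shift, hnorm_scal, Rabs_right in T by (specialize (Ht n); lra).
    specialize (Hrh1 n). fold U in T. lra. }
  assert (Hex : forall n, exists vp : H * H, hnorm (hsub (fst vp) (yc n)) < rh n /\ prox_subdiff f (fst vp) (snd vp)).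
  { intros n. destruct (prox_density f F EF Hlsc (yc n) (rh n) fxb (Hrh n)) as [v [p [Hv Hp]]].
    - intros x Hx. assert (A := Hyc n x Hx). specialize (Htd n). specialize (Ht n).
      assert (Hl := Hmin x ltac:(nra)). assert (0 <= hnorm (hsub x xb) ^ 2) by nra. nra.
    - exists (v, p). auto. }
  set (vp := fun n => proj1_sig (constructive_indefinite_description _ (Hex n))).
  assert (Hvp : forall n, hnorm (hsub (fst (vp n)) (yc n)) < rh n /\ prox_subdiff f (fst (vp n)) (snd (vp n))).
  { intros n. unfold vp. destruct (constructive_indefinite_description _ _). auto. }
  set (hs := fun n => hscal (/ t n) (hsub (fst (vp n)) xb)).
  set (zs := fun n => hscal (/ t n) (snd (vp n))).
  assert (E1 : forall n, hadd xb (hscal (t n) (hs n)) = fst (vp n)).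
  { intros n. specialize (Ht n). apply veq. unfold hs. isimpl. field. lra. }
  assert (E2 : forall n, hadd hzero (hscal (t n) (zs n)) = snd (vp n)).
  { intros n. specialize (Ht n). rewrite hadd_0_l. apply veq. unfold zs. isimpl. field. lra. }
  set (Bz := c * ((U + 1) ^ 2 + 1)).
  assert (Hzb : forall n, hnorm (zs n) <= Bz).
  { intros n. destruct (Hvp n) as [Hv Hp]. assert (Htn := Ht n).
    assert (A := Hyc n _ (Rlt_le _ _ Hv)). assert (Htd' := Htd n).
    assert (Hn := hnorm_nonneg (hsub (fst (vp n)) xb)).
    assert (G := grad_bound _ _ (t n) Hp Htn ltac:(nra)).
    unfold zs. rewrite hnorm_scal, Rabs_right by (apply Rle_ge, Rlt_le, Rinv_0_lt_compat; lra).
    assert (hnorm (hsub (fst (vp n)) xb) ^ 2 <= (t n * (U + 1)) ^ 2) by (apply pow_incr; lra).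
    assert (G2 : hnorm (snd (vp n)) <= t n * Bz).
    { eapply Rle_trans; [apply G|]. unfold Bz. apply Rle_div_l; auto.
      replace (t n * (c * ((U + 1) ^ 2 + 1)) * t n) with (c * ((t n * (U + 1)) ^ 2 + t n ^ 2)) by ring.
      apply Rmult_le_compat_l; lra. }
    apply (Rmult_le_reg_l (t n)); auto. rewrite <- Rmult_assoc, Rinv_r by lra. lra. }
  destruct (weak_compact zs Bz Hzb) as [k [zeta [Hk Hw]]].
  assert (Hkg := incr_ge k Hk).
  exists zeta, (fun i => t (k i)), (fun i => hs (k i)), (fun i => zs (k i)).
  split; [intros; auto|split; [|split; [|split; [auto|]]]].
  - apply cv_sub; auto. intros eps He.
    destruct (small_inv (eps * (U + 2) / d0)) as [N HN].
    { apply Rdiv_lt_0_compat; auto. nra. }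
    exists N. intros n Hn. unfold R_dist. rewrite Rminus_0_r, Rabs_right by (apply Rle_ge, Rlt_le, Ht).
    specialize (HN n Hn). unfold t. cbv beta. specialize (Hn1 n).
    assert (Hx : d0 / ((U + 2) * (INR n + 2)) <= d0 / (U + 2) * / (INR n + 1)).
    { unfold Rdiv. rewrite Rinv_mult. rewrite Rmult_assoc. apply Rmult_le_compat_l; [lra|].
      apply Rmult_le_compat_l. apply Rlt_le, Rinv_0_lt_compat; lra.
      apply Rinv_le_contravar; auto. lra. }
    assert (Hq : d0 / (U + 2) * / (INR n + 1) < d0 / (U + 2) * (eps * (U + 2) / d0)).
    { apply Rmult_lt_compat_l; auto. apply Rdiv_lt_0_compat; lra. }
    replace (d0 / (U + 2) * (eps * (U + 2) / d0)) with eps in Hq by (field; repeat split; lra). lra.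
  - apply cvn_sub; auto. intros eps He. destruct (small_inv eps He) as [N HN]. exists N.
    intros n Hn. specialize (HN n Hn). destruct (Hvp n) as [Hv _]. assert (Htn := Ht n).
    replace (hsub (hs n) u) with (hscal (/ t n) (hsub (fst (vp n)) (yc n))).
    2:{ apply veq. unfold hs, yc. isimpl. field. lra. }
    rewrite hnorm_scal, Rabs_right by (apply Rle_ge, Rlt_le, Rinv_0_lt_compat; lra).
    unfold rh in Hv. apply Rlt_trans with (/ t n * (t n / (INR n + 1))).
    apply Rmult_lt_compat_l; auto. apply Rinv_0_lt_compat; lra.
    replace (/ t n * (t n / (INR n + 1))) with (/ (INR n + 1)) by (specialize (Hn1 n); field; split; lra). auto.
  - intros i. rewrite E1, E2. apply Hvp.
Qed.

Section Mosco.
Context (phi : H -> ereal)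
  (Hmos : forall tau : nat -> R, (forall n, 0 < tau n) -> Un_cv tau 0 ->
     mosco_cv (fun n => epi (Delta2 f xb hzero (tau n))) (epi phi)).

Lemma epi_D (t : R) u r : 0 < t -> epi (Delta2 f xb hzero t) u r <-> D t u <= r.
Proof. intros Ht. unfold epi. rewrite Delta2_D by auto. simpl. tauto. Qed.

Lemma mos_liminf tau (u : nat -> H) uu M : (forall n, 0 < tau n) -> Un_cv tau 0 ->
  cv_norm u uu -> (forall N, exists n, (N <= n)%nat /\ D (tau n) (u n) <= M) ->
  ele (phi uu) (Fin M).
Proof.
  intros Hp H0' Hu Hex. destruct (subseq_of _ Hex) as [k [Hk1 [Hk2 Hk3]]].
  destruct (Hmos tau Hp H0') as [_ Hw]. apply (proj2 (Hw uu M)).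
  exists k, (fun i => u (k i)), (fun _ => M). split; [auto|split; [|split]].
  - intros i. apply epi_D; auto.
  - apply cvn_weak, cvn_sub; auto.
  - apply cv_const.
Qed.

Lemma mos_rec tau uu r : (forall n, 0 < tau n) -> Un_cv tau 0 -> ele (phi uu) (Fin r) ->
  exists (us : nat -> H) (rs : nat -> R), (forall n, D (tau n) (us n) <= rs n) /\
    cv_norm us uu /\ Un_cv rs r.
Proof.
  intros Hp H0' Hr. destruct (Hmos tau Hp H0') as [Hn _].
  destruct (proj1 (Hn uu r) Hr) as [us [rs [Hc1 [Hc2 Hc3]]]].
  exists us, rs. split; auto. intros n. apply epi_D; auto.
Qed.

Lemma mos_lim tau (us : nat -> H) uu (rs : nat -> R) r : (forall n, 0 < tau n) -> Un_cv tau 0 ->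
  (forall n, D (tau n) (us n) <= rs n) -> cv_norm us uu -> Un_cv rs r -> ele (phi uu) (Fin r).
Proof.
  intros Hp H0' Hd Hu Hr. destruct (Hmos tau Hp H0') as [Hn _].
  apply (proj2 (Hn uu r)). exists us, rs. split; auto. intros n. apply epi_D; auto.
Qed.


Lemma norm_near (a b : H) e : hnorm b = 1 -> hnorm (hsub a b) < e -> hnorm a < 1 + e /\ 1 - e < hnorm a.
Proof.
  intros Hb Ha. split.
  - assert (T1 := hnorm_triangle (hsub a b) b).
    replace (hadd (hsub a b) b) with a in T1 by (apply veq; isimpl; ring). lra.
  - assert (R1 := hnorm_rev_tri b a). rewrite hnorm_sub_sym in R1. lra.
Qed.

Lemma second_all h z : hnorm h = 1 -> TM f xb hzero h z -> b0 <= hinner z h.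
Proof.
  intros Hh [t [hs [zs [Ht [Ht0 [Hhs [Hzs Hp]]]]]]].
  assert (Hfin : ele (phi h) (Fin (2 * c))).
  { apply (mos_lim t (fun _ => h) h (fun _ => 2 * c) (2*c)); auto.
    - intros n. eapply Rle_trans. apply D_upper; auto. rewrite Hh. lra.
    - apply cvn_const.
    - apply cv_const. }
  destruct (phi h) as [ph|] eqn:Eph; [|simpl in Hfin; contradiction].
  destruct (mos_rec t h ph Ht Ht0 ltac:(rewrite Eph; simpl; lra)) as [us [rs [Hur [Hus Hrs]]]].
  assert (Hph : b0 <= ph).
  { apply (lim_small b0 ph (1 + 2 * b0) 1); [lra|lra|]. intros e He.
    destruct (ev_wit _ (ev_and _ _ (ev_cvn us h e Hus ltac:(lra))
       (ev_and _ _ (ev_cv rs ph e Hrs ltac:(lra)) (ev_cv t 0 (d0/2) Ht0 ltac:(lra)))))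
       as [n [H1 [H2 H3]]].
    assert (Htn := Ht n).
    rewrite Rminus_0_r, Rabs_right in H3 by lra.
    destruct (norm_near (us n) h e Hh H1) as [N1 N2].
    assert (Hn := hnorm_nonneg (us n)).
    assert (L := D_lower (t n) (us n) (Ht n) ltac:(nra)).
    specialize (Hur n). apply Rabs_def2 in H2.
    assert (hnorm (us n) ^2 >= 1 - 2*e) by nra. nra. }
  assert (Hzb : ev (fun n => hnorm (zs n) <= 5 * c)).
  { apply (ev_impl _ _ (ev_and _ _ (ev_cvn hs h 1 Hhs ltac:(lra)) (ev_cv t 0 (d0/4) Ht0 ltac:(lra)))).
    intros n [H1 H2]. assert (Htn := Ht n).
    rewrite Rminus_0_r, Rabs_right in H2 by lra.
    destruct (norm_near (hs n) h 1 Hh H1) as [N1 N2].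
    assert (Hn := hnorm_nonneg (hs n)).
    assert (G := grad_bound _ _ (t n) (Hp n) Htn).
    rewrite hsub_shift, hadd_0_l, !hnorm_scal, Rabs_right in G by lra.
    specialize (G ltac:(nra)).
    assert (t n * hnorm (zs n) <= t n * (5 * c)).
    { eapply Rle_trans; [apply G|].
      replace (c * ((t n * hnorm (hs n)) ^ 2 + t n ^ 2) / t n) with
        (t n * (c * (hnorm (hs n)^2 + 1))) by (field; lra).
      apply Rmult_le_compat_l; [lra|]. assert (hnorm (hs n)^2 <= 4) by nra. nra. }
    nra. }
  set (w := hinner z h).
  assert (Hwn : forall e, 0 < e -> ev (fun n => Rabs (hinner (zs n) (hs n) - w) < e)).
  { intros e He.
    assert (He2 : 0 < e / (2 * (5 * c + 1))) by (apply Rdiv_lt_0_compat; lra).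
    apply (ev_impl _ _ (ev_and _ _ Hzb (ev_and _ _ (ev_cvn hs h _ Hhs He2)
       (ev_cv _ _ (e/2) (Hzs h) ltac:(lra))))).
    intros n [H1 [H2 H3]]. cbv beta in H3.
    replace (hinner (zs n) (hs n) - w) with
      (hinner (zs n) (hsub (hs n) h) + (hinner (zs n) h - hinner z h)) by (unfold w; isimpl; ring).
    eapply Rle_lt_trans; [apply Rabs_triang|].
    assert (C1 := CS (zs n) (hsub (hs n) h)).
    assert (Hn := hnorm_nonneg (hsub (hs n) h)).
    assert (Hz := hnorm_nonneg (zs n)).
    assert (hnorm (hsub (hs n) h) * (2 * (5 * c + 1)) < e).
    { apply (Rmult_lt_compat_r (2 * (5 * c + 1))) in H2; [|lra].
      unfold Rdiv in H2. rewrite Rmult_assoc, Rinv_l in H2 by lra. lra. }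
    assert (hnorm (zs n) * hnorm (hsub (hs n) h) <= 5 * c * hnorm (hsub (hs n) h)) by nra.
    nra. }
  apply Rle_trans with ph; auto.
  apply (lim_small ph w (4 * c) 1); [lra|lra|]. intros s Hs.
  assert (Key : 2 * s * (ph - w) <= 8 * c * s^2).
  { apply (lim_small (2 * s * (ph - w)) (8 * c * s^2) (9 + 16 * c) 1); [lra|lra|].
    intros e He.
    assert (F5 : ev (fun n => ph - e <= D (t n) (hsub (hscal 2 (us n)) (hs n)))).
    { apply NNPP. intros Hne0. pose proof (ev_not _ Hne0) as Hne.
      assert (Hcv : cv_norm (fun n => hsub (hscal 2 (us n)) (hs n)) h).
      { intros eps Heps.
        destruct (ev_and _ _ (ev_cvn us h (eps/3) Hus ltac:(lra))
                   (ev_cvn hs h (eps/3) Hhs ltac:(lra))) as [N HN].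
        exists N. intros n Hn. destruct (HN n Hn) as [A1 A2].
        replace (hsub (hsub (hscal 2 (us n)) (hs n)) h) with
          (hadd (hscal 2 (hsub (us n) h)) (hopp (hsub (hs n) h))) by (apply veq; isimpl; ring).
        eapply Rle_lt_trans; [apply hnorm_triangle|].
        rewrite hnorm_scal, hnorm_opp, Rabs_right by lra. lra. }
      assert (E := mos_liminf t _ h (ph - e) Ht Ht0 Hcv).
      rewrite Eph in E. simpl in E.
      assert (ph <= ph - e); [|lra]. apply E. intros N.
      destruct (Hne N) as [n [Hn1 Hn2]]. exists n. split; auto. lra. }
    set (t' := fun n => (1 + s) * t n).
    assert (Ht' : forall n, 0 < t' n) by (intros; unfold t'; specialize (Ht n); nra).
    assert (Ht'0 : Un_cv t' 0) by (apply cv_scal; auto).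
    assert (F6 : ev (fun n => ph - e <= D (t' n) (hs n))).
    { apply NNPP. intros Hne0. pose proof (ev_not _ Hne0) as Hne.
      assert (E := mos_liminf t' hs h (ph - e) Ht' Ht'0 Hhs).
      rewrite Eph in E. simpl in E.
      assert (ph <= ph - e); [|lra]. apply E. intros N.
      destruct (Hne N) as [n [Hn1 Hn2]]. exists n. split; auto. lra. }
    destruct (ev_wit _ (ev_and _ _ F5 (ev_and _ _ F6 (ev_and _ _ (Hwn e ltac:(lra))
       (ev_and _ _ (ev_cvn hs h e Hhs ltac:(lra)) (ev_and _ _ (ev_cvn us h e Hus ltac:(lra))
       (ev_cv rs ph e Hrs ltac:(lra))))))))
       as [n [G5 [G6 [G7 [G8 [G9 G10]]]]]].
    assert (Htn := Ht n).
    set (a := hs n) in *. set (u := us n) in *. set (tn := t n) in *.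
    assert (DS := D_sc tn a (zs n) (hscal (1+s) a) Htn (Hp n)).
    replace (hsub (hscal (1 + s) a) a) with (hscal s a) in DS by (apply veq; isimpl; ring).
    rewrite hinner_scal_r, hnorm_scal, Rabs_right in DS by lra.
    assert (DM := D_mid tn a u Htn).
    unfold t' in G6. rewrite <- (D_scale tn (1+s) a) in DS by lra.
    fold tn in G6.
    assert (Hu := Hur n). fold u tn in Hu. apply Rabs_def2 in G10. apply Rabs_def2 in G7.
    assert (Tau : hnorm (hsub a u) < 2 * e).
    { assert (T := hnorm_sub_tri a h u). rewrite (hnorm_sub_sym h u) in T. lra. }
    destruct (norm_near a h e Hh G8) as [Na1 Na2].
    assert (Hna := hnorm_nonneg a). assert (Hnau := hnorm_nonneg (hsub a u)).
    set (Dv := D ((1 + s) * tn) a) in *.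
    set (Da := D tn a) in *. set (Du := D tn u) in *. set (D2 := D tn (hsub (hscal 2 u) a)) in *.
    set (wn := hinner (zs n) a) in *.
    assert (I1 : (1 + s) ^ 2 * (ph - e) <= Dv * (1 + s) ^ 2).
    { rewrite (Rmult_comm Dv). apply Rmult_le_compat_l; nra. }
    assert (I2 : 2 * (s * wn) <= 2 * s * (w + e)) by nra.
    assert (I3 : 2 * c * (s * hnorm a) ^ 2 <= 8 * c * s ^ 2).
    { rewrite Rpow_mult_distr. assert (hnorm a ^ 2 <= 4) by nra.
      assert (0 <= s^2) by nra.
      assert (s^2 * hnorm a ^2 <= s^2 * 4) by (apply Rmult_le_compat_l; nra).
      assert (2 * c * (s^2 * hnorm a ^2) <= 2 * c * (s^2 * 4)) by (apply Rmult_le_compat_l; nra).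
      nra. }
    assert (I4 : 4 * c * hnorm (hsub a u) ^ 2 <= 16 * c * e).
    { assert (hnorm (hsub a u) ^ 2 <= 4 * e) by nra. nra. }
    assert (I5 : 0 <= s ^ 2 * ph) by nra.
    assert (I6 : (1 + s) ^ 2 * e <= 4 * e).
    { assert ((1+s)^2 <= 4) by nra. apply Rmult_le_compat_r; lra. }
    assert (I7 : s * e <= e) by nra.
    nra. }
  assert (Hs2 : 0 < 2 * s) by lra.
  apply (Rmult_le_reg_l (2 * s)); auto. nra.
Qed.

End Mosco.
End Main.

Theorem theorem5p2 (H : Hilbert) (f : H -> ereal) (xb : H) :
  proper f -> lsc f -> paraconcave f ->
  in_dom f xb -> prox_subdiff f xb hzero ->
  continuous_at f xb ->
  twice_epi_diff_mosco f xb hzero ->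
  qri_nonempty (NM f xb hzero) ->
  strict_lmin_order2 f xb ->
  soc_first_kind f xb /\ soc_second_kind f xb /\ soc_third_kind f xb.
Proof.
  intros _ Hlsc [lam [Hlam Hconc]] [fxb Efxb] H0 _ [phi [_ Hmos]] _
    [b0 [d0 [Hb0 [Hd0 [fxb' [Efxb' Hmin]]]]]].
  rewrite Efxb in Efxb'. injection Efxb' as <-.
  set (c := 1 / (2 * lam)) in *.
  assert (Hc : 0 < c) by (unfold c; apply Rdiv_lt_0_compat; lra).
  assert (Hfin : forall y, exists r, f y = Fin r).
  { intros y. destruct (semiconcave_bound f c Hc Hconc xb hzero fxb Efxb H0 y) as [r [Er _]].
    exists r; auto. }
  set (F := fun y => match f y with Fin r => r | Pinf => 0 end).
  assert (EF : forall y, f y = Fin (F y)).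
  { intros y. unfold F. destruct (Hfin y) as [r Er]. rewrite Er. reflexivity. }
  assert (Hmin' : forall x, hnorm (hsub x xb) < d0 -> fxb + b0 / 2 * hnorm (hsub x xb) ^ 2 <= F x).
  { intros x Hx. specialize (Hmin x Hx). rewrite EF in Hmin. exact Hmin. }
  split; [|split].
  - exact (first_kind f xb fxb Efxb F EF b0 d0 Hb0 Hd0 Hmin').
  - exists b0. split; auto. intros h Hh [z Hz]. exists z. split; auto.
    exact (second_all f xb c Hc Hconc fxb Efxb H0 F EF b0 d0 Hb0 Hd0 Hmin' phi Hmos h z Hh Hz).
  - exists b0. split; auto. intros h z Hh _ Hz.
    destruct (dom_full f xb c Hc Hconc fxb Efxb H0 F EF b0 d0 Hb0 Hd0 Hmin' Hlsc (hopp h)) as [zeta Hzeta].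
    assert (Hh' : hnorm (hopp h) = 1) by (rewrite hnorm_opp; auto).
    assert (S := second_all f xb c Hc Hconc fxb Efxb H0 F EF b0 d0 Hb0 Hd0 Hmin' phi Hmos _ _ Hh' Hzeta).
    specialize (Hz (hopp h) zeta Hzeta).
    rewrite hopp_scal, !hinner_scal_r, hinner_scal_l in *. rewrite (hinner_sym h zeta) in Hz. lra.
Qed.
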